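(* $\overline{\mathcal{P}}$ is polynomially convex, i.e. for every $x\in\mathbb{C}^3\setminus\overline{\mathcal{P}}$ there is a polynomial $f$ in three variables with $|f|\le1$ on $\overline{\mathcal{P}}$ and $|f(x)|>1$. Moreover $\mathcal{P}$ is polynomially convex in the sense that for every compact $K\subset\mathcal{P}$ the polynomial hull $\widehat K=\{x\in\mathbb{C}^3: |f(x)|\le\sup_K|f| \text{ for all polynomials } f\}$ is contained in $\mathcal{P}$.
   Context: $\mathbb{B}$ is the open unit ball of $\mathbb{C}^{2\times 2}$ (operator norm), $\pi(A)=(a_{21},\operatorname{tr}A,\det A)$, $\mathcal{P}=\pi(\mathbb{B})$, $\overline{\mathcal{P}}$ its closure. *)

(* Defs.v *)
From Stdlib Require Import Reals List.
Open Scope R_scope.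

Definition C : Type := (R * R)%type.
Definition Cre (z : C) : R := fst z.
Definition Cim (z : C) : R := snd z.
Definition C0 : C := (0, 0).
Definition C1 : C := (1, 0).
Definition Cadd (z w : C) : C := (Cre z + Cre w, Cim z + Cim w).
Definition Csub (z w : C) : C := (Cre z - Cre w, Cim z - Cim w).
Definition Cmul (z w : C) : C :=
  (Cre z * Cre w - Cim z * Cim w, Cre z * Cim w + Cim z * Cre w).
Fixpoint Cpow (z : C) (n : nat) : C :=
  match n with O => C1 | S m => Cmul z (Cpow z m) end.
Definition Cnorm2 (z : C) : R := Cre z * Cre z + Cim z * Cim z.
Definition Cmod (z : C) : R := sqrt (Cnorm2 z).

Definition C3 : Type := (C * C * C)%type.
Definition dist3 (x y : C3) : R :=
  let '(x1, x2, x3) := x in let '(y1, y2, y3) := y in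
  sqrt (Cnorm2 (Csub x1 y1) + Cnorm2 (Csub x2 y2) + Cnorm2 (Csub x3 y3)).

(* Polynomials in three complex variables: finite lists of monomial terms
   c * z1^i * z2^j * z3^k. *)
Definition poly3 : Type := list (C * (nat * nat * nat)).
Definition eval_poly3 (f : poly3) (x : C3) : C :=
  let '(z1, z2, z3) := x in
  fold_right (fun t acc =>
    let '(c, (i, j, k)) := t in
    Cadd (Cmul c (Cmul (Cpow z1 i) (Cmul (Cpow z2 j) (Cpow z3 k)))) acc)
    C0 f.

Record mat2 : Type := Mat2 { a11 : C; a12 : C; a21 : C; a22 : C }.

(* Operator norm (w.r.t. Euclidean norm on C^2) strictly less than 1:
   sup_{v <> 0} |Av| / |v| < 1, i.e. there is r < 1 with |Av| <= r |v|. *)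
Definition in_unit_ball (A : mat2) : Prop :=
  exists r : R, 0 <= r /\ r < 1 /\
    forall v1 v2 : C,
      Cnorm2 (Cadd (Cmul (a11 A) v1) (Cmul (a12 A) v2))
      + Cnorm2 (Cadd (Cmul (a21 A) v1) (Cmul (a22 A) v2))
      <= (r * r) * (Cnorm2 v1 + Cnorm2 v2).

Definition piA (A : mat2) : C3 :=
  (a21 A, Cadd (a11 A) (a22 A), Csub (Cmul (a11 A) (a22 A)) (Cmul (a12 A) (a21 A))).

Definition Pdom (x : C3) : Prop := exists A : mat2, in_unit_ball A /\ piA A = x.
Definition closure3 (S : C3 -> Prop) (x : C3) : Prop :=
  forall eps : R, 0 < eps -> exists y : C3, S y /\ dist3 x y < eps.
Definition Pbar (x : C3) : Prop := closure3 Pdom x.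

(* Compact subsets of C^3 (Heine-Borel: closed and bounded) *)
Definition closed3 (K : C3 -> Prop) : Prop :=
  forall x, closure3 K x -> K x.
Definition bounded3 (K : C3 -> Prop) : Prop :=
  exists M : R, forall x, K x -> dist3 x (C0, C0, C0) <= M.
Definition compact3 (K : C3 -> Prop) : Prop := closed3 K /\ bounded3 K.

(* Polynomial hull: |f(x)| <= sup_K |f| for every polynomial f, i.e.
   |f(x)| <= M for every upper bound M of |f| on K. *)
Definition poly_hull (K : C3 -> Prop) (x : C3) : Prop :=
  forall (f : poly3) (M : R),
    (forall y, K y -> Cmod (eval_poly3 f y) <= M) ->
    Cmod (eval_poly3 f x) <= M.

(* Main.v *)
Require Import Defs.
From Stdlib Require Import Reals List Lra Psatz Classical ClassicalEpsilon.
From Coquelicot Require Complex.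
Open Scope R_scope.

Ltac csimpl := unfold Cadd, Csub, Cmul, Cnorm2, Cre, Cim, C0, C1 in *; simpl in *.

Lemma Cnorm2_ge0 z : 0 <= Cnorm2 z.
Proof. destruct z; csimpl; nra. Qed.

Lemma Cmod_ge0 z : 0 <= Cmod z.
Proof. apply sqrt_pos. Qed.

Lemma Cmod_sq z : Cmod z * Cmod z = Cnorm2 z.
Proof. unfold Cmod; apply sqrt_sqrt, Cnorm2_ge0. Qed.

Lemma Cmod_coq z : Cmod z = Complex.Cmod z.
Proof. unfold Cmod, Complex.Cmod, Cnorm2, Cre, Cim; f_equal; ring. Qed.

Lemma Cnorm2_mul z w : Cnorm2 (Cmul z w) = Cnorm2 z * Cnorm2 w.
Proof. destruct z, w; csimpl; ring. Qed.

Lemma Cmod_mul z w : Cmod (Cmul z w) = Cmod z * Cmod w.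
Proof. unfold Cmod; rewrite Cnorm2_mul; apply sqrt_mult; apply Cnorm2_ge0. Qed.

Lemma Cmod_add z w : Cmod (Cadd z w) <= Cmod z + Cmod w.
Proof. rewrite !Cmod_coq. apply Complex.Cmod_triangle. Qed.

Lemma Cmod_le_sq z w : Cnorm2 z <= Cnorm2 w -> Cmod z <= Cmod w.
Proof. intro H; unfold Cmod; apply sqrt_le_1_alt; auto. Qed.

Lemma Cmod_sq_le z w : Cmod z <= Cmod w -> Cnorm2 z <= Cnorm2 w.
Proof. intro H. rewrite <- !Cmod_sq. pose proof (Cmod_ge0 z). nra. Qed.

Lemma Cmod_lt_sq z w : Cnorm2 z < Cnorm2 w -> Cmod z < Cmod w.
Proof. intro H; unfold Cmod; apply sqrt_lt_1_alt; split; auto using Cnorm2_ge0. Qed.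

Lemma Cmod_sub z w : Cmod (Csub z w) >= Cmod z - Cmod w.
Proof.
  assert (E : z = Cadd (Csub z w) w) by (destruct z, w; csimpl; f_equal; ring).
  pose proof (Cmod_add (Csub z w) w). rewrite <- E in H. lra.
Qed.

Lemma Cmod_neg w : Cmod (Cmul (-1,0) w) = Cmod w.
Proof. unfold Cmod; f_equal; destruct w; csimpl; ring. Qed.

Lemma Cmod_sub2 z w : Cmod (Cadd z w) >= Cmod z - Cmod w.
Proof.
  assert (E : z = Cadd (Cadd z w) (Cmul (-1,0) w)) by (destruct z, w; csimpl; f_equal; ring).
  pose proof (Cmod_add (Cadd z w) (Cmul (-1,0) w)). rewrite <- E, Cmod_neg in H. lra.
Qed.

Lemma Cmod_Cnorm2_lt1 z : Cmod z < 1 <-> Cnorm2 z < 1.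
Proof.
  split; intro H.
  - rewrite <- Cmod_sq. pose proof (Cmod_ge0 z). nra.
  - unfold Cmod. rewrite <- sqrt_1. apply sqrt_lt_1_alt. split; auto using Cnorm2_ge0.
Qed.

Definition RC (r : R) : Defs.C := (r, 0).
Lemma Cmod_RC r : Cmod (RC r) = Rabs r.
Proof. unfold Cmod, RC; csimpl. rewrite <- sqrt_Rsqr_abs. unfold Rsqr. f_equal; ring. Qed.

Definition Copp (z : Defs.C) : Defs.C := (- Cre z, - Cim z).
Lemma Cdefs_ring : ring_theory Defs.C0 Defs.C1 Cadd Cmul Csub Copp (@eq Defs.C).
Proof.
  constructor; intros; repeat match goal with z : Defs.C |- _ => destruct z end;
  unfold Copp; csimpl; f_equal; ring.
Qed.
Add Ring Cdr : Cdefs_ring.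

Lemma Cpow_add z i j : Cpow z (i + j) = Cmul (Cpow z i) (Cpow z j).
Proof. induction i; simpl. ring. rewrite IHi; ring. Qed.
Lemma Cpow_mul z w n : Cpow (Cmul z w) n = Cmul (Cpow z n) (Cpow w n).
Proof. induction n; simpl. unfold Defs.C1; csimpl; f_equal; ring. rewrite IHn; ring. Qed.
Lemma RC_mul a b : RC (a * b) = Cmul (RC a) (RC b).
Proof. unfold RC; csimpl; f_equal; ring. Qed.
Lemma RC_pow a n : RC (a ^ n) = Cpow (RC a) n.
Proof. induction n; simpl. reflexivity. rewrite RC_mul, IHn. reflexivity. Qed.
Lemma Cnorm2_pow z n : Cnorm2 (Cpow z n) = Cnorm2 z ^ n.
Proof. induction n; simpl. unfold Cnorm2, Defs.C1; simpl; ring. rewrite Cnorm2_mul, IHn; ring. Qed.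
Lemma Cmod_pow z n : Cmod (Cpow z n) = Cmod z ^ n.
Proof. induction n; simpl. unfold Cmod, Cnorm2, Defs.C1; simpl. replace (1*1+0*0) with 1 by ring. apply sqrt_1.
  rewrite Cmod_mul, IHn; ring. Qed.

Definition mon3 : Type := (nat * nat * nat)%type.
Definition madd (m1 m2 : mon3) : mon3 :=
  let '(i1, j1, k1) := m1 in let '(i2, j2, k2) := m2 in
  ((i1 + i2)%nat, (j1 + j2)%nat, (k1 + k2)%nat).
Definition meval (m : mon3) (x : C3) : Defs.C :=
  let '(z1, z2, z3) := x in let '(i, j, k) := m in
  Cmul (Cpow z1 i) (Cmul (Cpow z2 j) (Cpow z3 k)).

Lemma eval_nil x : eval_poly3 nil x = Defs.C0.
Proof. destruct x as [[? ?] ?]; reflexivity. Qed.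

Lemma eval_cons c m f x :
  eval_poly3 ((c, m) :: f) x = Cadd (Cmul c (meval m x)) (eval_poly3 f x).
Proof. destruct x as [[? ?] ?]; destruct m as [[? ?] ?]; reflexivity. Qed.

Definition padd (f g : poly3) : poly3 := f ++ g.
Lemma eval_padd f g x : eval_poly3 (padd f g) x = Cadd (eval_poly3 f x) (eval_poly3 g x).
Proof.
  induction f as [|[c m] f IH]; unfold padd in *; simpl.
  - rewrite eval_nil. ring.
  - rewrite !eval_cons, IH. ring.
Qed.

Definition pscale (c : Defs.C) (f : poly3) : poly3 := map (fun t => (Cmul c (fst t), snd t)) f.
Lemma eval_pscale c f x : eval_poly3 (pscale c f) x = Cmul c (eval_poly3 f x).
Proof.
  induction f as [|[d m] f IH].
  - unfold pscale; simpl. rewrite eval_nil. ring.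
  - change (pscale c ((d, m) :: f)) with ((Cmul c d, m) :: pscale c f).
    rewrite !eval_cons, IH. ring.
Qed.

Lemma meval_add m1 m2 x : meval (madd m1 m2) x = Cmul (meval m1 x) (meval m2 x).
Proof.
  destruct x as [[z1 z2] z3], m1 as [[i1 j1] k1], m2 as [[i2 j2] k2]; simpl.
  rewrite !Cpow_add. ring.
Qed.

Definition pmul (f g : poly3) : poly3 :=
  flat_map (fun t1 => map (fun t2 => (Cmul (fst t1) (fst t2), madd (snd t1) (snd t2))) g) f.
Lemma eval_map_mul c m g x :
  eval_poly3 (map (fun t2 => (Cmul c (fst t2), madd m (snd t2))) g) x
  = Cmul (Cmul c (meval m x)) (eval_poly3 g x).
Proof.
  induction g as [|[d m'] g IHg].
  - change (eval_poly3 nil x = Cmul (Cmul c (meval m x)) (eval_poly3 nil x)).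
    rewrite eval_nil. ring.
  - change (eval_poly3 ((Cmul c d, madd m m') :: map (fun t2 => (Cmul c (fst t2), madd m (snd t2))) g) x
       = Cmul (Cmul c (meval m x)) (eval_poly3 ((d, m') :: g) x)).
    rewrite !eval_cons, IHg, meval_add. ring.
Qed.

Lemma eval_pmul f g x : eval_poly3 (pmul f g) x = Cmul (eval_poly3 f x) (eval_poly3 g x).
Proof.
  induction f as [|[c m] f IH].
  - change (eval_poly3 nil x = Cmul (eval_poly3 nil x) (eval_poly3 g x)). rewrite eval_nil. ring.
  - change (eval_poly3 (padd (map (fun t2 => (Cmul c (fst t2), madd m (snd t2))) g) (pmul f g)) x
      = Cmul (eval_poly3 ((c, m) :: f) x) (eval_poly3 g x)).
    rewrite eval_padd, IH, eval_map_mul, eval_cons. ring.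
Qed.

Definition pconst (c : Defs.C) : poly3 := (c, (0%nat, 0%nat, 0%nat)) :: nil.
Lemma eval_pconst c x : eval_poly3 (pconst c) x = c.
Proof. destruct x as [[? ?] ?]; unfold pconst; simpl; simpl; ring. Qed.

Definition pvA : poly3 := (Defs.C1, (1%nat, 0%nat, 0%nat)) :: nil.
Definition pvS : poly3 := (Defs.C1, (0%nat, 1%nat, 0%nat)) :: nil.
Definition pvP : poly3 := (Defs.C1, (0%nat, 0%nat, 1%nat)) :: nil.
Lemma eval_pvA a s p : eval_poly3 pvA (a, s, p) = a.
Proof. unfold pvA; simpl; simpl; ring. Qed.
Lemma eval_pvS a s p : eval_poly3 pvS (a, s, p) = s.
Proof. unfold pvS; simpl; simpl; ring. Qed.
Lemma eval_pvP a s p : eval_poly3 pvP (a, s, p) = p.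
Proof. unfold pvP; simpl; simpl; ring. Qed.

Definition Dsc (t : R) (x : C3) : C3 :=
  let '(a, s, p) := x in (Cmul (RC t) a, Cmul (RC t) s, Cmul (RC (t * t)) p).

Definition pdil (t : R) (f : poly3) : poly3 :=
  map (fun tm => (Cmul (fst tm) (RC (t ^ (fst (fst (snd tm)) + snd (fst (snd tm)) + 2 * snd (snd tm)))), snd tm)) f.
Lemma eval_pdil t f x : eval_poly3 (pdil t f) x = eval_poly3 f (Dsc t x).
Proof.
  destruct x as [[a s] p].
  induction f as [|[c [[i j] k]] f IH].
  - reflexivity.
  - change (eval_poly3 ((Cmul c (RC (t ^ (i + j + 2 * k))), (i, j, k)) :: pdil t f) (a, s, p) =
       eval_poly3 ((c, (i, j, k)) :: f) (Dsc t (a, s, p))).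
    rewrite !eval_cons, IH. f_equal. simpl.
    rewrite !Cpow_mul, !RC_pow, !Cpow_add.
    rewrite RC_mul, Cpow_mul. change (Cpow (RC t) 0) with Defs.C1. ring.
Qed.

Definition ccont (F : C3 -> Defs.C) (x : C3) : Prop :=
  forall eps, 0 < eps -> exists del, 0 < del /\
    forall y, dist3 x y < del -> Cmod (Csub (F y) (F x)) < eps.

Lemma ccont_const c x : ccont (fun _ => c) x.
Proof.
  intros e He; exists 1; split; [lra|]; intros y _.
  replace (Csub c c) with Defs.C0 by ring.
  unfold Cmod, Cnorm2, Defs.C0; simpl. replace (0*0+0*0) with 0 by ring. rewrite sqrt_0; lra.
Qed.

Lemma Cnorm2_sub_sym a b : Cnorm2 (Csub a b) = Cnorm2 (Csub b a).
Proof. destruct a, b; csimpl; ring. Qed.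

Lemma dist3_ge1 a s p a' s' p' :
  Cmod (Csub a' a) <= dist3 (a, s, p) (a', s', p') /\
  Cmod (Csub s' s) <= dist3 (a, s, p) (a', s', p') /\
  Cmod (Csub p' p) <= dist3 (a, s, p) (a', s', p').
Proof.
  unfold dist3, Cmod. rewrite !(Cnorm2_sub_sym _ a), !(Cnorm2_sub_sym _ s), !(Cnorm2_sub_sym _ p).
  pose proof (Cnorm2_ge0 (Csub a a')). pose proof (Cnorm2_ge0 (Csub s s')).
  pose proof (Cnorm2_ge0 (Csub p p')).
  repeat split; apply sqrt_le_1_alt; lra.
Qed.

Lemma dist3_sym x y : dist3 x y = dist3 y x.
Proof.
  destruct x as [[a s] p], y as [[a' s'] p']. unfold dist3.
  rewrite (Cnorm2_sub_sym a), (Cnorm2_sub_sym s), (Cnorm2_sub_sym p). reflexivity.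
Qed.

Lemma ccont_proj1 x : ccont (fun y => let '(a, s, p) := y in a) x.
Proof.
  intros e He; exists e; split; auto. intros [[a' s'] p'] H. destruct x as [[a s] p].
  pose proof (dist3_ge1 a s p a' s' p'). lra.
Qed.
Lemma ccont_proj2 x : ccont (fun y => let '(a, s, p) := y in s) x.
Proof.
  intros e He; exists e; split; auto. intros [[a' s'] p'] H. destruct x as [[a s] p].
  pose proof (dist3_ge1 a s p a' s' p'). lra.
Qed.
Lemma ccont_proj3 x : ccont (fun y => let '(a, s, p) := y in p) x.
Proof.
  intros e He; exists e; split; auto. intros [[a' s'] p'] H. destruct x as [[a s] p].
  pose proof (dist3_ge1 a s p a' s' p'). lra.
Qed.

Lemma ccont_add F G x : ccont F x -> ccont G x -> ccont (fun y => Cadd (F y) (G y)) x.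
Proof.
  intros HF HG e He.
  destruct (HF (e/2)) as [d1 [Hd1 H1]]; [lra|].
  destruct (HG (e/2)) as [d2 [Hd2 H2]]; [lra|].
  exists (Rmin d1 d2); split; [apply Rmin_pos; auto|]. intros y Hy.
  assert (Hy1 : dist3 x y < d1) by (pose proof (Rmin_l d1 d2); lra).
  assert (Hy2 : dist3 x y < d2) by (pose proof (Rmin_r d1 d2); lra).
  specialize (H1 y Hy1); specialize (H2 y Hy2).
  replace (Csub (Cadd (F y) (G y)) (Cadd (F x) (G x))) with (Cadd (Csub (F y) (F x)) (Csub (G y) (G x))) by ring.
  pose proof (Cmod_add (Csub (F y) (F x)) (Csub (G y) (G x))). lra.
Qed.

Lemma ccont_mul F G x : ccont F x -> ccont G x -> ccont (fun y => Cmul (F y) (G y)) x.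
Proof.
  intros HF HG e He.
  set (K := 1 + Cmod (F x) + Cmod (G x)).
  assert (HK : 1 <= K) by (unfold K; pose proof (Cmod_ge0 (F x)); pose proof (Cmod_ge0 (G x)); lra).
  set (eta := Rmin 1 (e / (2 * K))).
  assert (Heta : 0 < eta) by (apply Rmin_pos; [lra|]; apply Rdiv_lt_0_compat; lra).
  assert (Heta1 : eta <= 1) by apply Rmin_l.
  assert (Heta2 : eta <= e / (2 * K)) by apply Rmin_r.
  destruct (HF eta Heta) as [d1 [Hd1 H1]].
  destruct (HG eta Heta) as [d2 [Hd2 H2]].
  exists (Rmin d1 d2); split; [apply Rmin_pos; auto|]. intros y Hy.
  assert (Hy1 : dist3 x y < d1) by (pose proof (Rmin_l d1 d2); lra).
  assert (Hy2 : dist3 x y < d2) by (pose proof (Rmin_r d1 d2); lra).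
  specialize (H1 y Hy1); specialize (H2 y Hy2).
  replace (Csub (Cmul (F y) (G y)) (Cmul (F x) (G x))) with
    (Cadd (Cmul (Csub (F y) (F x)) (Csub (G y) (G x)))
      (Cadd (Cmul (Csub (F y) (F x)) (G x)) (Cmul (F x) (Csub (G y) (G x))))) by ring.
  eapply Rle_lt_trans. apply Cmod_add.
  eapply Rle_lt_trans. apply Rplus_le_compat_l. apply Cmod_add.
  rewrite !Cmod_mul.
  pose proof (Cmod_ge0 (Csub (F y) (F x))). pose proof (Cmod_ge0 (Csub (G y) (G x))).
  pose proof (Cmod_ge0 (F x)). pose proof (Cmod_ge0 (G x)).
  assert (eta * K <= e / 2).
  { apply Rmult_le_compat_r with (r := K) in Heta2; [|lra].
    replace (e / (2 * K) * K) with (e/2) in Heta2 by (field; lra). lra. }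
  assert (Cmod (Csub (F y) (F x)) * Cmod (Csub (G y) (G x)) <= eta * 1) by (apply Rmult_le_compat; lra).
  assert (Cmod (Csub (F y) (F x)) * Cmod (G x) <= eta * Cmod (G x)) by (apply Rmult_le_compat_r; lra).
  assert (Cmod (F x) * Cmod (Csub (G y) (G x)) <= Cmod (F x) * eta) by (apply Rmult_le_compat_l; lra).
  unfold K in *. nra.
Qed.

Lemma ccont_pow F x n : ccont F x -> ccont (fun y => Cpow (F y) n) x.
Proof.
  intro HF. induction n; simpl.
  - apply ccont_const.
  - apply ccont_mul; auto.
Qed.

Lemma ccont_ext F G x : (forall y, F y = G y) -> ccont F x -> ccont G x.
Proof.
  intros E H e He. destruct (H e He) as [d [Hd Hd']]. exists d; split; auto.
  intros y Hy. rewrite <- !E. auto.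
Qed.

Lemma ccont_eval f x : ccont (eval_poly3 f) x.
Proof.
  induction f as [|[c [[i j] k]] f IH].
  - apply (ccont_ext (fun _ => Defs.C0)). intros; rewrite eval_nil; auto. apply ccont_const.
  - apply (ccont_ext (fun y => Cadd (Cmul c (meval (i, j, k) y)) (eval_poly3 f y))).
    { intros; rewrite eval_cons; auto. }
    apply ccont_add; auto. apply ccont_mul. apply ccont_const.
    apply (ccont_ext (fun y => Cmul (Cpow (let '(a, s, p) := y in a) i)
               (Cmul (Cpow (let '(a, s, p) := y in s) j) (Cpow (let '(a, s, p) := y in p) k)))).
    { intros [[a s] p]; reflexivity. }
    apply ccont_mul; [|apply ccont_mul]; apply ccont_pow;
      [apply ccont_proj1 | apply ccont_proj2 | apply ccont_proj3].
Qed.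

Lemma closure_bound f M (S : C3 -> Prop) x :
  (forall y, S y -> Cmod (eval_poly3 f y) <= M) -> closure3 S x -> Cmod (eval_poly3 f x) <= M.
Proof.
  intros HS Hx. destruct (Rle_or_lt (Cmod (eval_poly3 f x)) M) as [|Hlt]; auto.
  exfalso. destruct (ccont_eval f x (Cmod (eval_poly3 f x) - M)) as [d [Hd H]]; [lra|].
  destruct (Hx d Hd) as [y [Sy Hy]].
  specialize (H y Hy). specialize (HS y Sy).
  pose proof (Cmod_sub (eval_poly3 f x) (eval_poly3 f y)).
  assert (Cmod (Csub (eval_poly3 f x) (eval_poly3 f y)) = Cmod (Csub (eval_poly3 f y) (eval_poly3 f x))).
  { unfold Cmod; rewrite Cnorm2_sub_sym; auto. }
  lra.
Qed.

Definition Cconj (z : Defs.C) : Defs.C := (Cre z, - Cim z).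
Definition Dd (s p : Defs.C) : Defs.C := Csub (Cmul (RC (1/4)) (Cmul s s)) p.
Definition EE (s p : Defs.C) : R := 1 + Cnorm2 p - Cnorm2 s / 2.
Definition Gam (s p : Defs.C) : Prop := Cmod p <= 1 /\ 2 * Cmod (Dd s p) <= EE s p.
Definition qq (w s p : Defs.C) : Defs.C := Cadd (Csub Defs.C1 (Cmul s w)) (Cmul p (Cmul w w)).
Definition Gset (x : C3) : Prop :=
  let '(a, s, p) := x in
  Gam s p /\ forall w, Cnorm2 w < 1 -> Cmod a * (1 - Cnorm2 w) <= Cmod (qq w s p).

Definition contr (A : mat2) (r : R) : Prop :=
  forall v1 v2 : Defs.C,
      Cnorm2 (Cadd (Cmul (a11 A) v1) (Cmul (a12 A) v2))
      + Cnorm2 (Cadd (Cmul (a21 A) v1) (Cmul (a22 A) v2))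
      <= (r * r) * (Cnorm2 v1 + Cnorm2 v2).

Lemma Cmod_sqr z : Cmod (Cmul z z) = Cnorm2 z.
Proof. rewrite Cmod_mul. apply Cmod_sq. Qed.

Lemma Cmod_le1 z : Cnorm2 z <= 1 -> Cmod z <= 1.
Proof. intro H. unfold Cmod. rewrite <- sqrt_1. apply sqrt_le_1_alt; auto. Qed.

Lemma two_mod_prod z w : 2 * (Cmod z * Cmod w) <= Cnorm2 z + Cnorm2 w.
Proof. rewrite <- (Cmod_sq z), <- (Cmod_sq w). pose proof (Cmod_ge0 z). pose proof (pow2_ge_0 (Cmod z - Cmod w)). lra. Qed.

Section Mat.
Variable A : mat2.
Variable r : R.
Hypothesis Hr : 0 <= r <= 1.
Hypothesis HA : contr A r.

Let Sig := Cnorm2 (a11 A) + Cnorm2 (a12 A) + Cnorm2 (a21 A) + Cnorm2 (a22 A).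
Let s := Cadd (a11 A) (a22 A).
Let p := Csub (Cmul (a11 A) (a22 A)) (Cmul (a12 A) (a21 A)).

Lemma col1 : Cnorm2 (a11 A) + Cnorm2 (a21 A) <= r * r.
Proof.
  specialize (HA Defs.C1 Defs.C0). destruct A as [[x1 y1] [x2 y2] [x3 y3] [x4 y4]]; simpl in *.
  csimpl. nra.
Qed.
Lemma col2 : Cnorm2 (a12 A) + Cnorm2 (a22 A) <= r * r.
Proof.
  specialize (HA Defs.C0 Defs.C1). destruct A as [[x1 y1] [x2 y2] [x3 y3] [x4 y4]]; simpl in *.
  csimpl. nra.
Qed.

Lemma det_le1 : Cnorm2 p <= 1.
Proof.
  pose proof col1. pose proof col2.
  assert (Hl : Cnorm2 p + Cnorm2 (Cadd (Cmul (Cconj (a11 A)) (a12 A)) (Cmul (Cconj (a21 A)) (a22 A)))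
              = (Cnorm2 (a11 A) + Cnorm2 (a21 A)) * (Cnorm2 (a12 A) + Cnorm2 (a22 A))).
  { unfold p. destruct A as [[x1 y1] [x2 y2] [x3 y3] [x4 y4]]; simpl; unfold Cconj; csimpl. ring. }
  pose proof (Cnorm2_ge0 (Cadd (Cmul (Cconj (a11 A)) (a12 A)) (Cmul (Cconj (a21 A)) (a22 A)))).
  pose proof (Cnorm2_ge0 (a11 A)). pose proof (Cnorm2_ge0 (a21 A)).
  pose proof (Cnorm2_ge0 (a12 A)). pose proof (Cnorm2_ge0 (a22 A)).
  assert ((Cnorm2 (a11 A) + Cnorm2 (a21 A)) * (Cnorm2 (a12 A) + Cnorm2 (a22 A)) <= 1 * 1).
  { apply Rmult_le_compat; nra. }
  lra.
Qed.

Lemma trace_bound : r < 1 -> Sig <= 1 + Cnorm2 p.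
Proof.
  intro Hr1. pose proof col1 as Hc1.
  set (m := Cadd (Cmul (Cconj (a11 A)) (a12 A)) (Cmul (Cconj (a21 A)) (a22 A))).
  set (h11 := 1 - Cnorm2 (a11 A) - Cnorm2 (a21 A)).
  set (h22 := 1 - Cnorm2 (a12 A) - Cnorm2 (a22 A)).
  pose proof (HA m (RC h11)) as H.
  set (Av := Cnorm2 (Cadd (Cmul (a11 A) m) (Cmul (a12 A) (RC h11)))
      + Cnorm2 (Cadd (Cmul (a21 A) m) (Cmul (a22 A) (RC h11)))) in H.
  assert (E1 : Cnorm2 m + Cnorm2 (RC h11) - Av = h11 * (h11 * h22 - Cnorm2 m)).
  { unfold Av, m, h11, h22. destruct A as [[x1 y1] [x2 y2] [x3 y3] [x4 y4]]; simpl; unfold Cconj, RC; csimpl. ring. }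
  assert (E2 : h11 * h22 - Cnorm2 m = 1 - Sig + Cnorm2 p).
  { unfold Sig, p, m, h11, h22. destruct A as [[x1 y1] [x2 y2] [x3 y3] [x4 y4]]; simpl; unfold Cconj, RC; csimpl. ring. }
  assert (Hh : 0 < h11) by (unfold h11; nra).
  pose proof (Cnorm2_ge0 m). pose proof (Cnorm2_ge0 (RC h11)).
  assert (Av <= Cnorm2 m + Cnorm2 (RC h11)).
  { eapply Rle_trans; [apply H|]. assert (r * r <= 1) by nra. nra. }
  assert (0 <= h11 * (h11 * h22 - Cnorm2 m)) by lra.
  assert (0 <= h11 * h22 - Cnorm2 m).
  { destruct (Rle_or_lt 0 (h11 * h22 - Cnorm2 m)); auto. nra. }
  lra.
Qed.

Lemma D_bound : 2 * Cmod (Dd s p) <= Sig - Cnorm2 s / 2.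
Proof.
  set (d := Csub (a11 A) (a22 A)).
  assert (ED : Dd s p = Cadd (Cmul (RC (1/4)) (Cmul d d)) (Cmul (a12 A) (a21 A))).
  { unfold Dd, s, p, d. destruct A as [[x1 y1] [x2 y2] [x3 y3] [x4 y4]]; simpl; unfold RC; csimpl; f_equal; field. }
  assert (ES : Cnorm2 (a11 A) + Cnorm2 (a22 A) = Cnorm2 s / 2 + Cnorm2 d / 2).
  { unfold s, d. destruct A as [[x1 y1] [x2 y2] [x3 y3] [x4 y4]]; simpl; csimpl; field. }
  rewrite ED.
  pose proof (Cmod_add (Cmul (RC (1/4)) (Cmul d d)) (Cmul (a12 A) (a21 A))).
  rewrite !Cmod_mul, Cmod_RC, Cmod_sq in H.
  pose proof (two_mod_prod (a12 A) (a21 A)).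
  rewrite Rabs_right in H by lra.
  unfold Sig. lra.
Qed.

Lemma psi_bound w : Cnorm2 w < 1 ->
  Cmod (a21 A) * (1 - Cnorm2 w) <= Cmod (qq w s p).
Proof.
  intro Hw.
  set (u1 := Csub Defs.C1 (Cmul w (a22 A))).
  set (u2 := Cmul w (a21 A)).
  set (v1 := Cadd (Cmul (a11 A) u1) (Cmul (a12 A) u2)).
  set (v2 := Cadd (Cmul (a21 A) u1) (Cmul (a22 A) u2)).
  pose proof (HA u1 u2) as H. fold v1 v2 in H.
  assert (Ei : Cnorm2 (Csub u1 (Cmul w v1)) + Cnorm2 (Csub u2 (Cmul w v2))
     - (Cnorm2 (Csub v1 (Cmul (Cconj w) u1)) + Cnorm2 (Csub v2 (Cmul (Cconj w) u2)))
     = (1 - Cnorm2 w) * (Cnorm2 u1 + Cnorm2 u2 - Cnorm2 v1 - Cnorm2 v2)).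
  { destruct u1, u2, v1, v2, w; unfold Cconj; csimpl; ring. }
  assert (Eq1 : Csub u1 (Cmul w v1) = qq w s p).
  { unfold v1, u1, u2, qq, s, p. ring. }
  assert (Eq2 : Csub u2 (Cmul w v2) = Defs.C0).
  { unfold v2, u2, u1. ring. }
  assert (Eq3 : Csub v2 (Cmul (Cconj w) u2) = Cmul (a21 A) (RC (1 - Cnorm2 w))).
  { unfold v2, u1, u2. destruct A as [[x1 y1] [x2 y2] [x3 y3] [x4 y4]]; simpl; destruct w; unfold Cconj, RC; csimpl; f_equal; ring. }
  rewrite Eq1, Eq2, Eq3 in Ei.
  assert (Cnorm2 v1 + Cnorm2 v2 <= Cnorm2 u1 + Cnorm2 u2).
  { eapply Rle_trans; [apply H|]. pose proof (Cnorm2_ge0 u1). pose proof (Cnorm2_ge0 u2).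
    assert (r * r <= 1) by nra. nra. }
  pose proof (Cnorm2_ge0 (Csub v1 (Cmul (Cconj w) u1))).
  assert (Hq : Cnorm2 (Cmul (a21 A) (RC (1 - Cnorm2 w))) <= Cnorm2 (qq w s p)).
  { replace (Cnorm2 Defs.C0) with 0 in Ei by (unfold Cnorm2, Defs.C0; simpl; ring). nra. }
  assert (Hm : Cmod (a21 A) * (1 - Cnorm2 w) = Cmod (Cmul (a21 A) (RC (1 - Cnorm2 w)))).
  { rewrite Cmod_mul, Cmod_RC, Rabs_right; auto. lra. }
  rewrite Hm. apply Cmod_le_sq. exact Hq.
Qed.

End Mat.

Lemma contr_G A r : 0 <= r < 1 -> contr A r -> Gset (piA A).
Proof.
  intros Hr HA. assert (Hr' : 0 <= r <= 1) by lra. assert (Hr1 : r < 1) by lra.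
  unfold piA, Gset. split; [split|].
  - apply Cmod_le1. apply (det_le1 A r); auto.
  - pose proof (trace_bound A r Hr' HA Hr1).
    pose proof (D_bound A r HA). unfold EE. lra.
  - intros w Hw. apply (psi_bound A r); auto.
Qed.

Lemma Pdom_G y : Pdom y -> Gset y.
Proof.
  intros [A [[r [Hr0 [Hr1 HA]]] <-]]. apply (contr_G A r); auto.
Qed.

Lemma psd2 h11 h22 (m v1 v2 : Defs.C) : 0 <= h11 + h22 -> 0 <= h11 * h22 - Cnorm2 m ->
  0 <= h11 * Cnorm2 v1 + h22 * Cnorm2 v2 - 2 * Cre (Cmul (Cmul (Cconj v1) v2) m).
Proof.
  intros H1 H2. destruct m as [m1 m2], v1 as [x1 y1], v2 as [x2 y2].
  unfold Cconj in *; csimpl.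
  destruct (Rlt_or_le 0 h11) as [Ha|Ha].
  - assert (E : h11 * (h11 * (x1*x1+y1*y1) + h22 * (x2*x2+y2*y2) - 2 * ((x1 * x2 - - y1 * y2) * m1 - (x1 * y2 + - y1 * x2) * m2))
       = (h11 * x1 - (m1 * x2 - m2 * y2)) ^ 2 + (h11 * y1 - (m1 * y2 + m2 * x2)) ^ 2
         + (h11 * h22 - (m1 * m1 + m2 * m2)) * (x2 * x2 + y2 * y2)) by ring.
    assert (0 <= h11 * (h11 * (x1*x1+y1*y1) + h22 * (x2*x2+y2*y2) - 2 * ((x1 * x2 - - y1 * y2) * m1 - (x1 * y2 + - y1 * x2) * m2))).
    { rewrite E. pose proof (pow2_ge_0 (h11 * x1 - (m1 * x2 - m2 * y2))).
      pose proof (pow2_ge_0 (h11 * y1 - (m1 * y2 + m2 * x2))).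
      assert (0 <= (h11 * h22 - (m1 * m1 + m2 * m2)) * (x2 * x2 + y2 * y2)) by (apply Rmult_le_pos; nra). lra. }
    destruct (Rle_or_lt 0 (h11 * (x1*x1+y1*y1) + h22 * (x2*x2+y2*y2) - 2 * ((x1 * x2 - - y1 * y2) * m1 - (x1 * y2 + - y1 * x2) * m2))); auto.
    nra.
  - destruct (Rlt_or_le 0 h22) as [Hb|Hb].
    + assert (E : h22 * (h11 * (x1*x1+y1*y1) + h22 * (x2*x2+y2*y2) - 2 * ((x1 * x2 - - y1 * y2) * m1 - (x1 * y2 + - y1 * x2) * m2))
       = (h22 * x2 - (m1 * x1 + m2 * y1)) ^ 2 + (h22 * y2 - (m1 * y1 - m2 * x1)) ^ 2
         + (h11 * h22 - (m1 * m1 + m2 * m2)) * (x1 * x1 + y1 * y1)) by ring.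
      assert (0 <= h22 * (h11 * (x1*x1+y1*y1) + h22 * (x2*x2+y2*y2) - 2 * ((x1 * x2 - - y1 * y2) * m1 - (x1 * y2 + - y1 * x2) * m2))).
      { rewrite E. pose proof (pow2_ge_0 (h22 * x2 - (m1 * x1 + m2 * y1))).
        pose proof (pow2_ge_0 (h22 * y2 - (m1 * y1 - m2 * x1))).
        assert (0 <= (h11 * h22 - (m1 * m1 + m2 * m2)) * (x1 * x1 + y1 * y1)) by (apply Rmult_le_pos; nra). lra. }
      destruct (Rle_or_lt 0 (h11 * (x1*x1+y1*y1) + h22 * (x2*x2+y2*y2) - 2 * ((x1 * x2 - - y1 * y2) * m1 - (x1 * y2 + - y1 * x2) * m2))); auto.
      nra.
    + assert (h11 = 0) by lra. assert (h22 = 0) by lra. subst.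
      assert (m1 = 0) by nra. assert (m2 = 0) by nra. subst. lra.
Qed.

Lemma contr_of_trace A :
  Cnorm2 (a11 A) + Cnorm2 (a12 A) + Cnorm2 (a21 A) + Cnorm2 (a22 A)
     <= 1 + Cnorm2 (Csub (Cmul (a11 A) (a22 A)) (Cmul (a12 A) (a21 A))) ->
  Cnorm2 (Csub (Cmul (a11 A) (a22 A)) (Cmul (a12 A) (a21 A))) <= 1 ->
  contr A 1.
Proof.
  intros Ht Hd v1 v2.
  set (m := Cadd (Cmul (Cconj (a11 A)) (a12 A)) (Cmul (Cconj (a21 A)) (a22 A))).
  set (h11 := 1 - Cnorm2 (a11 A) - Cnorm2 (a21 A)).
  set (h22 := 1 - Cnorm2 (a12 A) - Cnorm2 (a22 A)).
  pose proof (psd2 h11 h22 m v1 v2) as P.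
  assert (E1 : Cnorm2 v1 + Cnorm2 v2 - (Cnorm2 (Cadd (Cmul (a11 A) v1) (Cmul (a12 A) v2))
      + Cnorm2 (Cadd (Cmul (a21 A) v1) (Cmul (a22 A) v2)))
      = h11 * Cnorm2 v1 + h22 * Cnorm2 v2 - 2 * Cre (Cmul (Cmul (Cconj v1) v2) m)).
  { unfold m, h11, h22. destruct A as [[x1 y1] [x2 y2] [x3 y3] [x4 y4]]; simpl; destruct v1, v2; unfold Cconj; csimpl. ring. }
  assert (E2 : h11 * h22 - Cnorm2 m = 1 - (Cnorm2 (a11 A) + Cnorm2 (a12 A) + Cnorm2 (a21 A) + Cnorm2 (a22 A))
      + Cnorm2 (Csub (Cmul (a11 A) (a22 A)) (Cmul (a12 A) (a21 A)))).
  { unfold m, h11, h22. destruct A as [[x1 y1] [x2 y2] [x3 y3] [x4 y4]]; simpl; unfold Cconj; csimpl. ring. }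
  assert (0 <= h11 + h22) by (unfold h11, h22; lra).
  assert (0 <= h11 * h22 - Cnorm2 m) by lra.
  specialize (P H H0). lra.
Qed.

Definition csqrt (z : Defs.C) : Defs.C :=
  (sqrt ((Cmod z + Cre z) / 2),
   (if Rle_dec 0 (Cim z) then 1 else -1) * sqrt ((Cmod z - Cre z) / 2)).

Lemma Cmod_re z : Rabs (Cre z) <= Cmod z.
Proof.
  unfold Cmod, Cnorm2. rewrite <- sqrt_Rsqr_abs. apply sqrt_le_1_alt. unfold Rsqr.
  pose proof (Rle_0_sqr (Cim z)). unfold Rsqr in *. lra.
Qed.

Lemma csqrt_prop z : Cmul (csqrt z) (csqrt z) = z /\ Cnorm2 (csqrt z) = Cmod z.
Proof.
  pose proof (Cmod_re z) as Hr. pose proof (Cmod_sq z) as Hs.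
  destruct z as [x y]. unfold csqrt, Cnorm2 in *; simpl in *. unfold Cre, Cim in *; simpl in *.
  set (r := Cmod (x, y)) in *.
  assert (H1 : 0 <= (r + x) / 2) by (destruct (Rle_dec 0 x); [rewrite Rabs_right in Hr by lra|rewrite Rabs_left in Hr by lra]; lra).
  assert (H2 : 0 <= (r - x) / 2) by (destruct (Rle_dec 0 x); [rewrite Rabs_right in Hr by lra|rewrite Rabs_left in Hr by lra]; lra).
  pose proof (sqrt_sqrt _ H1) as S1. pose proof (sqrt_sqrt _ H2) as S2.
  assert (P : sqrt ((r + x) / 2) * sqrt ((r - x) / 2) = Rabs y / 2).
  { rewrite <- sqrt_mult by auto.
    replace ((r + x) / 2 * ((r - x) / 2)) with (Rsqr (Rabs y / 2)).
    - apply sqrt_Rsqr. pose proof (Rabs_pos y); lra.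
    - unfold Rsqr. replace (Rabs y / 2 * (Rabs y / 2)) with ((Rabs y * Rabs y) / 4) by field.
      rewrite <- Rabs_mult, Rabs_right by nra. nra. }
  split.
  - unfold Cmul, Cre, Cim; simpl. destruct (Rle_dec 0 y).
    + rewrite Rabs_right in P by lra. f_equal; nra.
    + rewrite Rabs_left in P by lra. f_equal; nra.
  - destruct (Rle_dec 0 y); nra.
Qed.

Lemma construct_core (a s e : Defs.C) (c : R) (b : Defs.C) :
  let h := Cmul (RC (1/2)) s in
  let A := Mat2 (Cadd h (Cmul (RC c) e)) b a (Csub h (Cmul (RC c) e)) in
  Cmul b a = Cmul (RC (1 - c * c)) (Cmul e e) ->
  piA A = (a, s, Csub (Cmul (RC (1/4)) (Cmul s s)) (Cmul e e)) /\
  Csub (Cmul (a11 A) (a22 A)) (Cmul (a12 A) (a21 A)) = Csub (Cmul (RC (1/4)) (Cmul s s)) (Cmul e e) /\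
  Cnorm2 (a11 A) + Cnorm2 (a12 A) + Cnorm2 (a21 A) + Cnorm2 (a22 A)
    = Cnorm2 s / 2 + 2 * (c * c) * Cnorm2 e + Cnorm2 a + Cnorm2 b.
Proof.
  intros h A Hb.
  assert (Hdet : Csub (Cmul (a11 A) (a22 A)) (Cmul (a12 A) (a21 A)) = Csub (Cmul (RC (1/4)) (Cmul s s)) (Cmul e e)).
  { unfold A; simpl. replace (Cmul (Cadd h (Cmul (RC c) e)) (Csub h (Cmul (RC c) e)))
        with (Csub (Cmul h h) (Cmul (RC (c * c)) (Cmul e e))) by (rewrite RC_mul; ring).
      rewrite Hb. unfold h. destruct s, e; unfold RC; csimpl; f_equal; field. }
  split; [|split; auto].
  - unfold piA. rewrite <- Hdet. unfold A; simpl. f_equal. f_equal.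
    unfold h, RC; destruct s; csimpl; f_equal; field.
  - unfold A, h; simpl. destruct s, e; unfold RC; csimpl. field.
Qed.

Lemma conj_mul a : Cmul (Cconj a) a = RC (Cnorm2 a).
Proof. destruct a; unfold Cconj, RC; csimpl; f_equal; ring. Qed.

Lemma n2_bform t a e : Cnorm2 (Cmul (RC t) (Cmul (Cconj a) (Cmul e e))) = t * t * Cnorm2 a * (Cnorm2 e * Cnorm2 e).
Proof. destruct a, e; unfold Cconj, RC; csimpl; ring. Qed.

Lemma construct s p a :
  Cmod p <= 1 -> 2 * Cmod (Dd s p) <= EE s p ->
  (Cnorm2 a <= Cmod (Dd s p) \/
   Cnorm2 a * Cnorm2 a - EE s p * Cnorm2 a + Cmod (Dd s p) * Cmod (Dd s p) <= 0) ->
  exists A, contr A 1 /\ piA A = (a, s, p).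
Proof.
  intros Hp HD HS.
  destruct (csqrt_prop (Dd s p)) as [He1 He2].
  set (e := csqrt (Dd s p)) in *. set (d := Cmod (Dd s p)) in *. set (X := Cnorm2 a) in *.
  assert (Ep : p = Csub (Cmul (RC (1/4)) (Cmul s s)) (Cmul e e)).
  { rewrite He1. unfold Dd. ring. }
  assert (Hp2 : Cnorm2 p <= 1).
  { rewrite <- Cmod_sq. pose proof (Cmod_ge0 p). nra. }
  assert (HX : 0 <= X) by apply Cnorm2_ge0.
  assert (Hd : 0 <= d) by apply Cmod_ge0.
  assert (HEE : EE s p = 1 + Cnorm2 p - Cnorm2 s / 2) by reflexivity.
  assert (Key : forall c b, Cmul b a = Cmul (RC (1 - c * c)) (Cmul e e) ->
      Cnorm2 s / 2 + 2 * (c * c) * Cnorm2 e + Cnorm2 a + Cnorm2 b <= 1 + Cnorm2 p ->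
      exists A, contr A 1 /\ piA A = (a, s, p)).
  { intros c b Hb Ht. destruct (construct_core a s e c b Hb) as [Hpi [Hdet Hsig]].
    eexists; split; [apply contr_of_trace|].
    - rewrite Hsig, Hdet, <- Ep. exact Ht.
    - rewrite Hdet, <- Ep. exact Hp2.
    - rewrite Hpi, <- Ep. reflexivity. }
  destruct (Rle_or_lt X d) as [HXd|HXd].
  - destruct (Rle_lt_or_eq_dec 0 d Hd) as [Hd0|Hd0].
    +
      set (c := sqrt (1 - X / d)).
      assert (Hc : c * c = 1 - X / d).
      { unfold c. apply sqrt_sqrt. assert (X / d <= 1) by (apply Rmult_le_reg_r with d; [lra|]; unfold Rdiv; rewrite Rmult_assoc, Rinv_l by lra; lra). lra. }
      apply (Key c (Cmul (RC (1/d)) (Cmul (Cconj a) (Cmul e e)))).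
      * rewrite Hc. replace (1 - (1 - X / d)) with (X / d) by ring.
        replace (Cmul (Cmul (RC (1 / d)) (Cmul (Cconj a) (Cmul e e))) a)
          with (Cmul (RC (1 / d)) (Cmul (Cmul (Cconj a) a) (Cmul e e))) by ring.
        rewrite conj_mul. fold X.
        replace (Cmul (RC (1 / d)) (Cmul (RC X) (Cmul e e))) with (Cmul (Cmul (RC (1 / d)) (RC X)) (Cmul e e)) by ring.
        rewrite <- RC_mul. f_equal. f_equal. field. lra.
      * rewrite n2_bform, He2, Hc. fold d X.
        replace (1 / d * (1 / d) * X * (d * d)) with X by (field; lra).
        replace (Cnorm2 s / 2 + 2 * (1 - X / d) * d + X + X) with (Cnorm2 s / 2 + 2 * d) by (field; lra).
        lra.
    +
      subst d. assert (Ha : X = 0) by lra.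
      apply (Key 1 Defs.C0).
      * assert (a = Defs.C0).
        { unfold X, Cnorm2 in Ha. destruct a as [x y]; unfold Cre, Cim in Ha; simpl in Ha.
          assert (x = 0) by nra. assert (y = 0) by nra. rewrite H, H0; reflexivity. }
        subst a. unfold RC; csimpl; f_equal; ring.
      * rewrite He2. rewrite <- Hd0. unfold Cnorm2 at 3, Defs.C0; simpl. fold X. rewrite Ha. 
        rewrite <- Hd0 in HD. lra.
  -
    assert (HS2 : X * X - EE s p * X + d * d <= 0) by (destruct HS; [lra|auto]).
    apply (Key 0 (Cmul (RC (1/X)) (Cmul (Cconj a) (Cmul e e)))).
    + replace (Cmul (Cmul (RC (1 / X)) (Cmul (Cconj a) (Cmul e e))) a)
        with (Cmul (RC (1 / X)) (Cmul (Cmul (Cconj a) a) (Cmul e e))) by ring.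
      rewrite conj_mul. fold X.
      replace (Cmul (RC (1 / X)) (Cmul (RC X) (Cmul e e))) with (Cmul (Cmul (RC (1 / X)) (RC X)) (Cmul e e)) by ring.
      rewrite <- RC_mul. replace (1 / X * X) with (1 - 0 * 0) by (field; lra). reflexivity.
    + rewrite n2_bform, He2. fold d X.
      replace (1 / X * (1 / X) * X * (d * d)) with (d * d / X) by (field; lra).
      rewrite HEE in HS2.
      assert (d * d / X <= 1 + Cnorm2 p - Cnorm2 s / 2 - X).
      { apply (Rmult_le_reg_r X); [lra|]. replace (d * d / X * X) with (d * d) by (field; lra). nra. }
      lra.
Qed.

Definition uu (p : Defs.C) : R := 1 - Cnorm2 p.
Definition gg (s p : Defs.C) : Defs.C := Csub s (Cmul (Cconj s) p).
Definition NN (s p : Defs.C) (K : R) : Defs.C :=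
  Cadd (Csub (RC ((uu p + K) * (uu p + K))) (Cmul (Cmul s (Cconj (gg s p))) (RC (uu p + K))))
       (Cmul p (Cmul (Cconj (gg s p)) (Cconj (gg s p)))).

Lemma keyid (s p : Defs.C) (K : R) :
  K * K = uu p * uu p - Cnorm2 (gg s p) ->
  Cnorm2 (NN s p K) = 2 * ((uu p + K) * (uu p + K)) * (K * K) * (EE s p + K).
Proof.
  intros HK. destruct s as [s1 s2], p as [p1 p2].
  assert (E : Cnorm2 (NN (s1,s2) (p1,p2) K) - 2 * ((uu (p1,p2) + K) * (uu (p1,p2) + K)) * (K * K) * (EE (s1,s2) (p1,p2) + K)
     = (K * K - (uu (p1,p2) * uu (p1,p2) - Cnorm2 (gg (s1,s2) (p1,p2)))) * ((-1)*1 + (-4)*K + (-5)*K*K + (-2)*K*K*K + (2)*p2*p2 + (4)*p2*p2*K + (2)*p2*p2*K*K + (-1)*p2*p2*p2*p2 + (2)*p1*p1 + (4)*p1*p1*K + (2)*p1*p1*K*K + (-2)*p1*p1*p2*p2 + (-1)*p1*p1*p1*p1 + (1)*s2*s2 + (2)*s2*s2*K + (1)*s2*s2*K*K + (1)*s2*s2*p2*p2 + (2)*s2*s2*p1 + (2)*s2*s2*p1*K + (1)*s2*s2*p1*p1 + (-4)*s1*s2*p2 + (-4)*s1*s2*p2*K + (1)*s1*s1 + (2)*s1*s1*K + (1)*s1*s1*K*K + (1)*s1*s1*p2*p2 + (-2)*s1*s1*p1 + (-2)*s1*s1*p1*K + (1)*s1*s1*p1*p1)).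
  { unfold NN, uu, gg, EE, Cconj, RC; csimpl. field. }
  assert (Z : K * K - (uu (p1,p2) * uu (p1,p2) - Cnorm2 (gg (s1,s2) (p1,p2))) = 0) by lra.
  rewrite Z, Rmult_0_l in E. lra.
Qed.

Lemma Eid (s p : Defs.C) :
  uu p * uu p - Cnorm2 (gg s p) = EE s p * EE s p - 4 * Cnorm2 (Dd s p).
Proof. destruct s as [s1 s2], p as [p1 p2]. unfold uu, gg, EE, Dd, Cconj, RC; csimpl. field. Qed.

Lemma qq_NN s p K w :
  0 < uu p + K -> w = Cmul (RC (1 / (uu p + K))) (Cconj (gg s p)) ->
  qq w s p = Cmul (RC (1 / ((uu p + K) * (uu p + K)))) (NN s p K).
Proof.
  intros Hm ->. unfold NN. set (m := uu p + K). fold m in Hm.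
  destruct s as [s1 s2], p as [p1 p2]. unfold qq, gg, Cconj, RC; csimpl. f_equal; field; lra.
Qed.

Lemma n2_RCmul t z : Cnorm2 (Cmul (RC t) z) = t * t * Cnorm2 z.
Proof. destruct z; unfold RC; csimpl; ring. Qed.
Lemma n2_conj z : Cnorm2 (Cconj z) = Cnorm2 z.
Proof. destruct z; unfold Cconj; csimpl; ring. Qed.

Lemma interior_S a s p :
  Cmod p < 1 -> 2 * Cmod (Dd s p) < EE s p ->
  (forall w, Cnorm2 w < 1 -> Cmod a * (1 - Cnorm2 w) <= Cmod (qq w s p)) ->
  Cnorm2 a <= Cmod (Dd s p) \/
  Cnorm2 a * Cnorm2 a - EE s p * Cnorm2 a + Cmod (Dd s p) * Cmod (Dd s p) <= 0.
Proof.
  intros Hp HD Hpsi.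
  set (X := Cnorm2 a) in *. set (d := Cmod (Dd s p)) in *. set (E0 := EE s p) in *.
  destruct (Rle_or_lt X d) as [|HXd]; [left; auto|].
  destruct (Rle_or_lt (X * X - E0 * X + d * d) 0) as [|HQ]; [right; auto|].
  exfalso.
  assert (Hd0 : 0 <= d) by apply Cmod_ge0.
  assert (Hdd : d * d = Cnorm2 (Dd s p)) by apply Cmod_sq.
  assert (Hu : 0 < uu p).
  { unfold uu. rewrite <- Cmod_sq. pose proof (Cmod_ge0 p). nra. }
  pose proof (Eid s p) as HE. fold E0 in HE. rewrite <- Hdd in HE.
  set (c := uu p * uu p - Cnorm2 (gg s p)) in *.
  assert (Hc : 0 < c) by (rewrite HE; nra).
  set (K := sqrt c).
  assert (HK : K * K = c) by (apply sqrt_sqrt; lra).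
  assert (HK0 : 0 < K) by (apply sqrt_lt_R0; auto).
  assert (HKd : E0 - 2 * d <= K).
  { destruct (Rle_or_lt (E0 - 2 * d) K) as [|Hlt]; auto. exfalso.
    assert (K * K < (E0 - 2 * d) * (E0 - 2 * d)) by (apply Rmult_le_0_lt_compat; lra).
    assert (K * K = (E0 - 2 * d) * (E0 - 2 * d) + 4 * d * (E0 - 2 * d)) by (rewrite HK, HE; ring).
    assert (0 <= 4 * d * (E0 - 2 * d)) by (apply Rmult_le_pos; lra). lra. }
  assert (HXK : E0 + K < 2 * X).
  { assert (Hf : (X - (E0 + K) / 2) * (X - (E0 - K) / 2) = X * X - E0 * X + d * d).
    { replace (d * d) with ((E0 * E0 - K * K) / 4) by (rewrite HK, HE; field). field. }
    assert (0 < X - (E0 - K) / 2) by lra.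
    destruct (Rle_or_lt (X - (E0 + K) / 2) 0) as [Hn|Hn]; [|lra].
    assert ((X - (E0 + K) / 2) * (X - (E0 - K) / 2) <= 0) by nra. lra. }
  set (m := uu p + K).
  assert (Hm : 0 < m) by (unfold m; lra).
  set (w := Cmul (RC (1 / m)) (Cconj (gg s p))).
  assert (Hg : Cnorm2 (gg s p) = (uu p - K) * m) by (unfold m; unfold c in HK; nra).
  assert (Hw : Cnorm2 w = (uu p - K) / m).
  { unfold w. rewrite n2_RCmul, n2_conj, Hg. field. lra. }
  assert (Hw1 : Cnorm2 w < 1).
  { rewrite Hw. apply Rmult_lt_reg_r with m; auto. unfold Rdiv. rewrite Rmult_assoc, Rinv_l by lra. unfold m; lra. }
  assert (Hw2 : 1 - Cnorm2 w = 2 * K / m) by (rewrite Hw; unfold m; field; lra).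
  specialize (Hpsi w Hw1).
  rewrite (qq_NN s p K w Hm eq_refl) in Hpsi.
  rewrite Cmod_mul, Cmod_RC, Rabs_right in Hpsi by (apply Rle_ge; unfold Rdiv; rewrite Rmult_1_l; apply Rlt_le, Rinv_0_lt_compat; nra).
  rewrite Hw2 in Hpsi.
  pose proof (keyid s p K HK) as HN. fold m in HN. fold E0 in HN.
  pose proof (Cmod_ge0 a) as Ha0. pose proof (Cmod_ge0 (NN s p K)) as HN0.
  assert (Hsq : (Cmod a * (2 * K / m)) * (Cmod a * (2 * K / m)) <=
                (1 / (m * m) * Cmod (NN s p K)) * (1 / (m * m) * Cmod (NN s p K))).
  { apply Rmult_le_compat; auto; apply Rmult_le_pos; auto; unfold Rdiv; try apply Rmult_le_pos; try lra;
    apply Rlt_le, Rinv_0_lt_compat; nra. }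
  replace ((Cmod a * (2 * K / m)) * (Cmod a * (2 * K / m))) with ((Cmod a * Cmod a) * (4 * (K * K) / (m * m))) in Hsq by (field; lra).
  replace ((1 / (m * m) * Cmod (NN s p K)) * (1 / (m * m) * Cmod (NN s p K))) with
     ((Cmod (NN s p K) * Cmod (NN s p K)) / (m * m * (m * m))) in Hsq by (field; lra).
  rewrite !Cmod_sq, HN in Hsq. fold X in Hsq.
  replace (2 * (m * m) * (K * K) * (E0 + K) / (m * m * (m * m))) with ((E0 + K) * 2 * (K * K) / (m * m)) in Hsq by (field; lra).
  assert (HKK : 0 < 2 * (K * K) / (m * m)) by (apply Rdiv_lt_0_compat; nra).
  replace (X * (4 * (K * K) / (m * m))) with ((2 * X) * (2 * (K * K) / (m * m))) in Hsq by (field; lra).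
  replace ((E0 + K) * 2 * (K * K) / (m * m)) with ((E0 + K) * (2 * (K * K) / (m * m))) in Hsq by (field; lra).
  apply Rmult_le_reg_r in Hsq; auto. lra.
Qed.

Lemma Dsc_comp t u x : Dsc t (Dsc u x) = Dsc (t * u) x.
Proof. destruct x as [[a s] p]. unfold Dsc. rewrite !RC_mul. f_equal; [f_equal|]; ring. Qed.

Lemma Dsc_1 x : Dsc 1 x = x.
Proof. destruct x as [[[a1 a2] [s1 s2]] [p1 p2]]. unfold Dsc, RC; csimpl. repeat f_equal; ring. Qed.

Lemma Cmod_nonneg_mul t z : 0 <= t -> Cmod (Cmul (RC t) z) = t * Cmod z.
Proof. intro. rewrite Cmod_mul, Cmod_RC, Rabs_right; lra. Qed.

Lemma G_scale x t : Gset x -> 0 <= t <= 1 ->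
  Gset (Dsc t x) /\ (t < 1 -> let '(a, s, p) := Dsc t x in Cmod p < 1 /\ 2 * Cmod (Dd s p) < EE s p).
Proof.
  destruct x as [[a s] p]. intros [[Hp HD] Hpsi] Ht. unfold Dsc.
  assert (ED : Dd (Cmul (RC t) s) (Cmul (RC (t * t)) p) = Cmul (RC (t * t)) (Dd s p)).
  { unfold Dd. rewrite RC_mul. ring. }
  assert (EE' : EE (Cmul (RC t) s) (Cmul (RC (t * t)) p) = 1 + (t*t)*(t*t) * Cnorm2 p - (t * t) * (Cnorm2 s / 2)).
  { unfold EE. rewrite !n2_RCmul. field. }
  assert (Htt : 0 <= t * t <= 1) by nra.
  assert (HP : Cnorm2 p <= 1) by (rewrite <- Cmod_sq; pose proof (Cmod_ge0 p); nra).
  assert (HP0 : 0 <= Cnorm2 p) by apply Cnorm2_ge0.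
  unfold EE in HD.
  assert (Key : 2 * Cmod (Dd (Cmul (RC t) s) (Cmul (RC (t * t)) p)) + (1 - t * t) * (1 - t * t * Cnorm2 p)
                <= EE (Cmul (RC t) s) (Cmul (RC (t * t)) p)).
  { rewrite ED, EE', Cmod_nonneg_mul by lra. nra. }
  assert (Hq : 0 <= (1 - t * t) * (1 - t * t * Cnorm2 p)) by (apply Rmult_le_pos; nra).
  split.
  - split; [split|].
    + rewrite Cmod_nonneg_mul by lra. nra.
    + lra.
    + intros w Hw.
      assert (Hw' : Cnorm2 (Cmul (RC t) w) < 1) by (rewrite n2_RCmul; pose proof (Cnorm2_ge0 w); nra).
      specialize (Hpsi _ Hw').
      replace (qq w (Cmul (RC t) s) (Cmul (RC (t * t)) p)) with (qq (Cmul (RC t) w) s p)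
        by (unfold qq; rewrite RC_mul; ring).
      rewrite n2_RCmul in Hpsi. rewrite Cmod_nonneg_mul by lra.
      pose proof (Cmod_ge0 a). pose proof (Cnorm2_ge0 w).
      assert (t * (1 - Cnorm2 w) <= 1 - t * t * Cnorm2 w) by nra.
      assert (Cmod a * (t * (1 - Cnorm2 w)) <= Cmod a * (1 - t * t * Cnorm2 w)) by (apply Rmult_le_compat_l; auto).
      lra.
  - intros Ht1. split.
    + rewrite Cmod_nonneg_mul by lra. nra.
    + assert (0 < (1 - t * t) * (1 - t * t * Cnorm2 p)) by (apply Rmult_lt_0_compat; nra). lra.
Qed.

Lemma G_Pdom x t : Gset x -> 0 <= t < 1 -> Pdom (Dsc t x).
Proof.
  intros HG Ht.
  set (tau := sqrt t).
  assert (Htau : 0 <= tau < 1).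
  { unfold tau. split; [apply sqrt_pos|]. rewrite <- sqrt_1. apply sqrt_lt_1_alt; lra. }
  assert (Htt : tau * tau = t) by (apply sqrt_sqrt; lra).
  destruct (G_scale x tau HG ltac:(lra)) as [HG1 Hint].
  specialize (Hint (proj2 Htau)).
  destruct (Dsc tau x) as [[a s] p] eqn:Ey.
  destruct Hint as [Hp HD]. destruct HG1 as [[Hp' HD'] Hpsi].
  destruct (construct s p a) as [A [HA Hpi]]; auto.
  { apply interior_S; auto. }
  exists (Mat2 (Cmul (RC tau) (a11 A)) (Cmul (RC tau) (a12 A)) (Cmul (RC tau) (a21 A)) (Cmul (RC tau) (a22 A))).
  split.
  - exists tau. split; [lra|]. split; [lra|]. intros v1 v2. simpl.
    specialize (HA v1 v2).
    replace (Cadd (Cmul (Cmul (RC tau) (a11 A)) v1) (Cmul (Cmul (RC tau) (a12 A)) v2))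
      with (Cmul (RC tau) (Cadd (Cmul (a11 A) v1) (Cmul (a12 A) v2))) by ring.
    replace (Cadd (Cmul (Cmul (RC tau) (a21 A)) v1) (Cmul (Cmul (RC tau) (a22 A)) v2))
      with (Cmul (RC tau) (Cadd (Cmul (a21 A) v1) (Cmul (a22 A) v2))) by ring.
    rewrite !n2_RCmul. assert (0 <= tau * tau) by nra. nra.
  - rewrite <- Htt, <- Dsc_comp, Ey, <- Hpi. unfold piA, Dsc; simpl.
    rewrite RC_mul. f_equal; [f_equal|]; ring.
Qed.

Lemma G_Pbar x : Gset x -> Pbar x.
Proof.
  intros HG eps Heps.
  destruct x as [[a s] p].
  set (M := Cnorm2 a + Cnorm2 s + Cnorm2 p).
  assert (HM : 0 <= M) by (unfold M; pose proof (Cnorm2_ge0 a); pose proof (Cnorm2_ge0 s); pose proof (Cnorm2_ge0 p); lra).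
  set (del := Rmin (1/2) (eps / (2 * (sqrt M + 1)))).
  assert (Hsq : 0 <= sqrt M) by apply sqrt_pos.
  assert (Hdel : 0 < del) by (apply Rmin_pos; [lra|]; apply Rdiv_lt_0_compat; lra).
  assert (Hdel1 : del <= 1/2) by apply Rmin_l.
  assert (Hdel2 : del <= eps / (2 * (sqrt M + 1))) by apply Rmin_r.
  set (t := sqrt (1 - del)).
  assert (Htt : t * t = 1 - del) by (apply sqrt_sqrt; lra).
  assert (Ht : 0 <= t < 1).
  { assert (0 <= t) by apply sqrt_pos. split; auto. nra. }
  exists (Dsc t (a, s, p)). split; [apply G_Pdom; auto|].
  unfold Dsc, dist3.
  replace (Csub a (Cmul (RC t) a)) with (Cmul (RC (1 - t)) a) by (unfold RC; destruct a; csimpl; f_equal; ring).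
  replace (Csub s (Cmul (RC t) s)) with (Cmul (RC (1 - t)) s) by (unfold RC; destruct s; csimpl; f_equal; ring).
  replace (Csub p (Cmul (RC (t * t)) p)) with (Cmul (RC (1 - t * t)) p) by (unfold RC; destruct p; csimpl; f_equal; ring).
  rewrite !n2_RCmul.
  assert (H1t : 0 <= 1 - t <= del) by nra.
  assert (Hb : (1 - t) * (1 - t) * Cnorm2 a + (1 - t) * (1 - t) * Cnorm2 s + (1 - t * t) * (1 - t * t) * Cnorm2 p
               <= Rsqr (del * sqrt M)).
  { unfold Rsqr. replace (del * sqrt M * (del * sqrt M)) with (del * del * (sqrt M * sqrt M)) by ring.
    rewrite sqrt_sqrt by auto. unfold M.
    pose proof (Cnorm2_ge0 a); pose proof (Cnorm2_ge0 s); pose proof (Cnorm2_ge0 p).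
    assert ((1 - t) * (1 - t) <= del * del) by nra.
    assert ((1 - t * t) * (1 - t * t) = del * del) by nra. nra. }
  apply Rle_lt_trans with (sqrt (Rsqr (del * sqrt M))).
  - apply sqrt_le_1_alt. auto.
  - rewrite sqrt_Rsqr by nra.
    assert (del * (2 * (sqrt M + 1)) <= eps).
    { apply Rmult_le_compat_r with (r := 2 * (sqrt M + 1)) in Hdel2; [|lra].
      replace (eps / (2 * (sqrt M + 1)) * (2 * (sqrt M + 1))) with eps in Hdel2 by (field; lra). lra. }
    nra.
Qed.

Lemma roots_exist s p : exists l1 l2, s = Cadd l1 l2 /\ p = Cmul l1 l2.
Proof.
  destruct (csqrt_prop (Dd s p)) as [He _].
  set (e := csqrt (Dd s p)) in *.
  exists (Cadd (Cmul (RC (1/2)) s) e), (Csub (Cmul (RC (1/2)) s) e). split.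
  - destruct s; unfold RC; csimpl; f_equal; field.
  - replace (Cmul (Cadd (Cmul (RC (1 / 2)) s) e) (Csub (Cmul (RC (1 / 2)) s) e))
      with (Csub (Cmul (Cmul (RC (1/2)) (RC (1/2))) (Cmul s s)) (Cmul e e)) by ring.
    rewrite He. unfold Dd. rewrite <- RC_mul. replace (1/2 * (1/2)) with (1/4) by field. ring.
Qed.

Lemma Gam_roots_id l1 l2 :
  EE (Cadd l1 l2) (Cmul l1 l2) - 2 * Cmod (Dd (Cadd l1 l2) (Cmul l1 l2))
  = (1 - Cnorm2 l1) * (1 - Cnorm2 l2).
Proof.
  assert (ED : Dd (Cadd l1 l2) (Cmul l1 l2) = Cmul (RC (1/4)) (Cmul (Csub l1 l2) (Csub l1 l2))).
  { unfold Dd. destruct l1, l2; unfold RC; csimpl; f_equal; field. }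
  rewrite ED, Cmod_mul, Cmod_RC, Rabs_right by lra. rewrite Cmod_mul, Cmod_sq.
  unfold EE. rewrite Cnorm2_mul. destruct l1, l2; csimpl. field.
Qed.

Lemma Gam_roots s p l1 l2 : Gam s p -> s = Cadd l1 l2 -> p = Cmul l1 l2 ->
  Cmod l1 <= 1 /\ Cmod l2 <= 1.
Proof.
  intros [Hp HD] -> ->. pose proof (Gam_roots_id l1 l2).
  rewrite Cmod_mul in Hp.
  pose proof (Cmod_ge0 l1). pose proof (Cmod_ge0 l2).
  rewrite <- !Cmod_sq in H.
  assert (HH : 0 <= (1 - Cmod l1 * Cmod l1) * (1 - Cmod l2 * Cmod l2)) by lra.
  set (u := Cmod l1) in *. set (v := Cmod l2) in *.
  split.
  - destruct (Rle_or_lt u 1); auto. exfalso.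
    assert (1 < u * u) by nra.
    assert (1 - v * v <= 0).
    { destruct (Rle_or_lt (1 - v * v) 0); auto. assert ((1 - u * u) * (1 - v * v) < 0) by (apply Rmult_neg_pos; lra). lra. }
    assert (1 <= v) by nra. assert (1 < u * v) by nra. lra.
  - destruct (Rle_or_lt v 1); auto. exfalso.
    assert (1 < v * v) by nra.
    assert (1 - u * u <= 0).
    { destruct (Rle_or_lt (1 - u * u) 0); auto. assert ((1 - u * u) * (1 - v * v) < 0) by (apply Rmult_pos_neg; lra). lra. }
    assert (1 <= u) by nra. assert (1 < u * v) by nra. lra.
Qed.

Lemma notGam_roots s p l1 l2 : Cmod p <= 1 -> EE s p < 2 * Cmod (Dd s p) ->
  s = Cadd l1 l2 -> p = Cmul l1 l2 ->
  (1 < Cmod l1 /\ Cmod l2 < 1) \/ (1 < Cmod l2 /\ Cmod l1 < 1).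
Proof.
  intros Hp HD -> ->. pose proof (Gam_roots_id l1 l2).
  rewrite Cmod_mul in Hp.
  pose proof (Cmod_ge0 l1). pose proof (Cmod_ge0 l2).
  rewrite <- !Cmod_sq in H.
  assert ((1 - Cmod l1 * Cmod l1) * (1 - Cmod l2 * Cmod l2) < 0) by lra.
  set (u := Cmod l1) in *. set (v := Cmod l2) in *.
  destruct (Rlt_or_le 1 u).
  - left. split; auto. destruct (Rlt_or_le v 1); auto. assert (u * 1 <= u * v) by (apply Rmult_le_compat_l; lra). lra.
  - right.
    assert (1 < v).
    { destruct (Rlt_or_le 1 v); auto. exfalso.
      assert (0 <= 1 - u * u) by nra. assert (0 <= 1 - v * v) by nra.
      assert (0 <= (1 - u * u) * (1 - v * v)) by (apply Rmult_le_pos; auto). lra. }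
    split; auto. destruct (Rlt_or_le u 1); auto. assert (1 * v <= u * v) by (apply Rmult_le_compat_r; lra). lra.
Qed.

Lemma nat_ind2 (P : nat -> Prop) : P 0%nat -> P 1%nat ->
  (forall n, P n -> P (S n) -> P (S (S n))) -> forall n, P n.
Proof.
  intros H0 H1 HS n. assert (P n /\ P (S n)); [|tauto].
  induction n; auto. destruct IHn; split; auto.
Qed.

Fixpoint psum (n : nat) : poly3 :=
  match n with
  | O => pconst (RC 2)
  | S O => pvS
  | S ((S m) as k) => padd (pmul pvS (psum k)) (pscale (RC (-1)) (pmul pvP (psum m)))
  end.

Lemma eval_psum n a l1 l2 :
  eval_poly3 (psum n) (a, Cadd l1 l2, Cmul l1 l2) = Cadd (Cpow l1 n) (Cpow l2 n).
Proof.
  induction n using nat_ind2.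
  - change (psum 0) with (pconst (RC 2)). rewrite eval_pconst. simpl. unfold RC, Defs.C1, Cadd, Cre, Cim; simpl; f_equal; lra.
  - change (psum 1) with pvS. rewrite eval_pvS. change (Cpow l1 1) with (Cmul l1 Defs.C1). change (Cpow l2 1) with (Cmul l2 Defs.C1). ring.
  - change (psum (S (S n))) with (padd (pmul pvS (psum (S n))) (pscale (RC (-1)) (pmul pvP (psum n)))).
    rewrite eval_padd, eval_pscale, !eval_pmul, eval_pvS, eval_pvP, IHn, IHn0.
    change (Cpow l1 (S (S n))) with (Cmul l1 (Cmul l1 (Cpow l1 n))).
    change (Cpow l2 (S (S n))) with (Cmul l2 (Cmul l2 (Cpow l2 n))).
    change (Cpow l1 (S n)) with (Cmul l1 (Cpow l1 n)).
    change (Cpow l2 (S n)) with (Cmul l2 (Cpow l2 n)).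
    replace (RC (-1)) with (Csub Defs.C0 Defs.C1) by (unfold RC, Defs.C0, Defs.C1; csimpl; f_equal; ring).
    ring.
Qed.

Lemma bern r n : 0 <= r -> 1 + INR n * r <= (1 + r) ^ n.
Proof.
  intro Hr. induction n.
  - simpl. lra.
  - rewrite S_INR. simpl. pose proof (pos_INR n).
    assert (0 <= INR n * r * r) by (apply Rmult_le_pos; [apply Rmult_le_pos|]; lra). nra.
Qed.

Lemma Cmod_le1_pow z n : Cmod z <= 1 -> Cmod (Cpow z n) <= 1.
Proof.
  intro H. rewrite Cmod_pow. pose proof (Cmod_ge0 z).
  induction n; simpl; [lra|]. assert (Cmod z * Cmod z ^ n <= 1 * 1) by (apply Rmult_le_compat; auto; apply pow_le; auto). lra.
Qed.

Lemma Gset_roots_bound a s p : Gset (a, s, p) -> exists l1 l2, s = Cadd l1 l2 /\ p = Cmul l1 l2 /\ Cmod l1 <= 1 /\ Cmod l2 <= 1.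
Proof.
  intros [HG _]. destruct (roots_exist s p) as [l1 [l2 [Hs Hp]]].
  destruct (Gam_roots s p l1 l2 HG Hs Hp). exists l1, l2; auto.
Qed.

Lemma sep_power a L M : 1 < Cmod L -> Cmod M < 1 ->
  exists f, (forall y, Pdom y -> Cmod (eval_poly3 f y) <= 1) /\
            1 < Cmod (eval_poly3 f (a, Cadd L M, Cmul L M)).
Proof.
  intros HL HM.
  destruct (INR_archimed (Cmod L - 1) 2) as [n Hn]; [lra|].
  exists (pscale (RC (1/2)) (psum n)). split.
  - intros [[a' s'] p'] Hy. apply Pdom_G in Hy.
    destruct (Gset_roots_bound _ _ _ Hy) as [m1 [m2 [-> [-> [H1 H2]]]]].
    rewrite eval_pscale, eval_psum, Cmod_mul, Cmod_RC, Rabs_right by lra.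
    pose proof (Cmod_add (Cpow m1 n) (Cpow m2 n)).
    pose proof (Cmod_le1_pow m1 n H1). pose proof (Cmod_le1_pow m2 n H2). lra.
  - rewrite eval_pscale, eval_psum, Cmod_mul, Cmod_RC, Rabs_right by lra.
    pose proof (Cmod_sub2 (Cpow L n) (Cpow M n)) as Ha.
    assert (HM1 : Cmod M <= 1) by lra.
    pose proof (Cmod_le1_pow M n HM1) as Hb.
    assert (HL1 : 0 <= Cmod L - 1) by lra.
    pose proof (bern (Cmod L - 1) n HL1) as Hc.
    replace (1 + (Cmod L - 1)) with (Cmod L) in Hc by ring. rewrite Cmod_pow in Ha. lra.
Qed.

Lemma sep_case2 a s p : Cmod p <= 1 -> EE s p < 2 * Cmod (Dd s p) ->
  exists f, (forall y, Pdom y -> Cmod (eval_poly3 f y) <= 1) /\ 1 < Cmod (eval_poly3 f (a, s, p)).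
Proof.
  intros Hp HD. destruct (roots_exist s p) as [l1 [l2 [Hs Hpp]]].
  destruct (notGam_roots s p l1 l2 Hp HD Hs Hpp) as [[H1 H2]|[H1 H2]].
  - subst. apply sep_power; auto.
  - replace s with (Cadd l2 l1) by (subst; ring). replace p with (Cmul l2 l1) by (subst; ring).
    apply sep_power; auto.
Qed.

Lemma sep_case1 x : let '(a, s, p) := x in 1 < Cmod p ->
  exists f, (forall y, Pdom y -> Cmod (eval_poly3 f y) <= 1) /\ 1 < Cmod (eval_poly3 f x).
Proof.
  destruct x as [[a s] p]. intro H. exists pvP. split.
  - intros [[a' s'] p'] Hy. apply Pdom_G in Hy. destruct Hy as [[Hp _] _]. rewrite eval_pvP. auto.
  - rewrite eval_pvP. auto.
Qed.

Fixpoint hp (n : nat) : poly3 :=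
  match n with
  | O => pconst Defs.C1
  | S O => pvS
  | S ((S m) as k) => padd (pmul pvS (hp k)) (pscale (RC (-1)) (pmul pvP (hp m)))
  end.

Lemma RCm1 : RC (-1) = Csub Defs.C0 Defs.C1.
Proof. unfold RC, Defs.C0, Defs.C1; csimpl; f_equal; ring. Qed.

Lemma eval_hp_rec n a s p :
  eval_poly3 (hp (S (S n))) (a, s, p) =
  Csub (Cmul s (eval_poly3 (hp (S n)) (a, s, p))) (Cmul p (eval_poly3 (hp n) (a, s, p))).
Proof.
  change (hp (S (S n))) with (padd (pmul pvS (hp (S n))) (pscale (RC (-1)) (pmul pvP (hp n)))).
  rewrite eval_padd, eval_pscale, !eval_pmul, eval_pvS, eval_pvP, RCm1. ring.
Qed.

Fixpoint Hs (l1 l2 : Defs.C) (n : nat) : Defs.C :=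
  match n with
  | O => Defs.C1
  | S m => Cadd (Cpow l1 (S m)) (Cmul l2 (Hs l1 l2 m))
  end.

Lemma eval_hp_Hs n a l1 l2 : eval_poly3 (hp n) (a, Cadd l1 l2, Cmul l1 l2) = Hs l1 l2 n.
Proof.
  induction n using nat_ind2.
  - change (hp 0) with (pconst Defs.C1). apply eval_pconst.
  - change (hp 1) with pvS. rewrite eval_pvS. simpl Hs. change (Cpow l1 1) with (Cmul l1 Defs.C1). ring.
  - rewrite eval_hp_rec, IHn, IHn0.
    change (Hs l1 l2 (S (S n))) with (Cadd (Cpow l1 (S (S n))) (Cmul l2 (Hs l1 l2 (S n)))).
    change (Hs l1 l2 (S n)) with (Cadd (Cpow l1 (S n)) (Cmul l2 (Hs l1 l2 n))).
    change (Cpow l1 (S (S n))) with (Cmul l1 (Cmul l1 (Cpow l1 n))).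
    change (Cpow l1 (S n)) with (Cmul l1 (Cpow l1 n)).
    ring.
Qed.

Lemma Hs_bound l1 l2 n : Cmod l1 <= 1 -> Cmod l2 <= 1 -> Cmod (Hs l1 l2 n) <= INR n + 1.
Proof.
  intros H1 H2. induction n.
  - simpl. unfold Cmod, Cnorm2, Defs.C1; simpl. replace (1 * 1 + 0 * 0) with 1 by ring. rewrite sqrt_1. lra.
  - change (Hs l1 l2 (S n)) with (Cadd (Cpow l1 (S n)) (Cmul l2 (Hs l1 l2 n))). eapply Rle_trans; [apply Cmod_add|]. rewrite Cmod_mul.
    pose proof (Cmod_le1_pow l1 (S n) H1). pose proof (Cmod_ge0 l2). pose proof (Cmod_ge0 (Hs l1 l2 n)).
    rewrite S_INR. assert (Cmod l2 * Cmod (Hs l1 l2 n) <= 1 * (INR n + 1)) by (apply Rmult_le_compat; auto).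
    lra.
Qed.

Fixpoint Tp (w : Defs.C) (N : nat) : poly3 :=
  match N with
  | O => hp 0
  | S M => padd (Tp w M) (pscale (Cpow w (S M)) (hp (S M)))
  end.

Lemma Tp_id w N a s p :
  Cmul (qq w s p) (eval_poly3 (Tp w N) (a, s, p)) =
  Csub Defs.C1 (Cmul (Cpow w (S N)) (Csub (eval_poly3 (hp (S N)) (a, s, p))
                                           (Cmul p (Cmul w (eval_poly3 (hp N) (a, s, p)))))).
Proof.
  induction N.
  - change (Tp w 0) with (pconst Defs.C1). change (hp 1) with pvS. change (hp 0) with (pconst Defs.C1).
    rewrite eval_pconst, eval_pvS. unfold qq. simpl Cpow. ring.
  - change (Tp w (S N)) with (padd (Tp w N) (pscale (Cpow w (S N)) (hp (S N)))).
    rewrite eval_padd, eval_pscale, eval_hp_rec.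
    replace (Cmul (qq w s p) (Cadd (eval_poly3 (Tp w N) (a, s, p))
       (Cmul (Cpow w (S N)) (eval_poly3 (hp (S N)) (a, s, p)))))
      with (Cadd (Cmul (qq w s p) (eval_poly3 (Tp w N) (a, s, p)))
             (Cmul (qq w s p) (Cmul (Cpow w (S N)) (eval_poly3 (hp (S N)) (a, s, p))))) by ring.
    rewrite IHN. change (Cpow w (S (S N))) with (Cmul w (Cpow w (S N))). unfold qq. ring.
Qed.

Lemma bern2 h n : 0 <= h -> 1 + INR n * h + INR n * (INR n - 1) / 2 * (h * h) <= (1 + h) ^ n.
Proof.
  intro Hh. induction n.
  - simpl. lra.
  - rewrite S_INR. simpl pow.
    assert (Hn : 0 <= INR n * (INR n - 1)).
    { destruct n. simpl; lra. rewrite S_INR. pose proof (pos_INR n). nra. }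
    assert (0 <= INR n * (INR n - 1) / 2 * (h * h) * h).
    { apply Rmult_le_pos; [|lra]. apply Rmult_le_pos; [|nra]. lra. }
    pose proof (pos_INR n).
    assert ((1 + h) * (1 + INR n * h + INR n * (INR n - 1) / 2 * (h * h)) <= (1 + h) * (1 + h) ^ n)
      by (apply Rmult_le_compat_l; lra).
    nra.
Qed.

Lemma small_eps r th : 0 <= r < 1 -> 0 < th -> exists N, r ^ (S N) * (2 * INR N + 3) < th.
Proof.
  intros Hr Hth. destruct (Req_dec r 0) as [->|Hr0].
  - exists 0%nat. simpl. lra.
  - set (h := 1 / r - 1).
    assert (Hh : 0 < h).
    { unfold h. assert (1 < 1 / r). { apply Rmult_lt_reg_r with r; [lra|]. unfold Rdiv. rewrite Rmult_assoc, Rinv_l by lra. lra. } lra. }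
    assert (Hrh : r * (1 + h) = 1) by (unfold h; field; lra).
    destruct (INR_archimed (th * (h * h)) 6) as [n Hn]; [apply Rmult_lt_0_compat; nra|].
    exists (S n). set (M := S (S n)).
    pose proof (bern2 h M (Rlt_le _ _ Hh)) as HB.
    assert (HrM : r ^ M * (1 + h) ^ M = 1) by (rewrite <- Rpow_mult_distr, Hrh; apply pow1).
    assert (HMr : INR M = INR n + 2) by (unfold M; rewrite !S_INR; ring).
    rewrite HMr in HB. rewrite S_INR.
    pose proof (pos_INR n).
    assert (Hpos : 0 < (1 + h) ^ M) by (apply pow_lt; lra).
    assert (HrMe : r ^ M = / (1 + h) ^ M) by (apply Rmult_eq_reg_r with ((1 + h) ^ M); [rewrite HrM, Rinv_l; lra | lra]).
    change (r ^ S (S n)) with (r ^ M). rewrite HrMe.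
    assert (Hlow : (INR n + 2) * (INR n + 1) / 2 * (h * h) <= (1 + h) ^ M).
    { replace (INR n + 2 - 1) with (INR n + 1) in HB by ring.
      assert (0 <= (INR n + 2) * h) by nra. lra. }
    assert (Hlp : 0 < (INR n + 2) * (INR n + 1) / 2 * (h * h)) by (apply Rmult_lt_0_compat; nra).
    apply Rle_lt_trans with (/ ((INR n + 2) * (INR n + 1) / 2 * (h * h)) * (2 * (INR n + 1) + 3)).
    + apply Rmult_le_compat_r; [lra|]. apply Rinv_le_contravar; auto.
    + apply Rmult_lt_reg_l with ((INR n + 2) * (INR n + 1) / 2 * (h * h)); auto.
      rewrite <- Rmult_assoc, Rinv_r by lra.
      assert (INR n * (th * (h * h)) > 6) by exact Hn.
      nra.
Qed.

Lemma qq_roots w l1 l2 : qq w (Cadd l1 l2) (Cmul l1 l2) = Cmul (Csub Defs.C1 (Cmul l1 w)) (Csub Defs.C1 (Cmul l2 w)).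
Proof. unfold qq. ring. Qed.

Lemma Cmod_C1 : Cmod Defs.C1 = 1.
Proof. unfold Cmod, Cnorm2, Defs.C1; simpl. replace (1 * 1 + 0 * 0) with 1 by ring. apply sqrt_1. Qed.

Lemma one_minus_pos l w : Cmod l <= 1 -> Cmod w < 1 -> 1 - Cmod w <= Cmod (Csub Defs.C1 (Cmul l w)).
Proof.
  intros Hl Hw. pose proof (Cmod_sub Defs.C1 (Cmul l w)). rewrite Cmod_C1, Cmod_mul in H.
  pose proof (Cmod_ge0 w). assert (Cmod l * Cmod w <= 1 * Cmod w) by (apply Rmult_le_compat_r; auto). lra.
Qed.

Lemma Tbound w N a' m1 m2 : Cmod m1 <= 1 -> Cmod m2 <= 1 -> Cmod w < 1 ->
  let eps := Cmod w ^ (S N) * (2 * INR N + 3) in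
  let y := (a', Cadd m1 m2, Cmul m1 m2) in
  0 < Cmod (qq w (Cadd m1 m2) (Cmul m1 m2)) /\
  Cmod (qq w (Cadd m1 m2) (Cmul m1 m2)) * Cmod (eval_poly3 (Tp w N) y) <= 1 + eps /\
  1 - eps <= Cmod (qq w (Cadd m1 m2) (Cmul m1 m2)) * Cmod (eval_poly3 (Tp w N) y).
Proof.
  intros H1 H2 Hw eps y.
  pose proof (Cmod_ge0 w) as Hw0.
  split.
  - rewrite qq_roots, Cmod_mul. pose proof (one_minus_pos m1 w H1 Hw). pose proof (one_minus_pos m2 w H2 Hw).
    apply Rmult_lt_0_compat; lra.
  - rewrite <- Cmod_mul. unfold y. rewrite Tp_id, !eval_hp_Hs.
    set (rho := Csub (Hs m1 m2 (S N)) (Cmul (Cmul m1 m2) (Cmul w (Hs m1 m2 N)))).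
    assert (Hrho : Cmod rho <= 2 * INR N + 3).
    { unfold rho. pose proof (Cmod_sub2 (Hs m1 m2 (S N)) (Cmul (Cmul (RC (-1)) (Cmul m1 m2)) (Cmul w (Hs m1 m2 N)))).
      replace (Csub (Hs m1 m2 (S N)) (Cmul (Cmul m1 m2) (Cmul w (Hs m1 m2 N))))
        with (Cadd (Hs m1 m2 (S N)) (Cmul (Cmul (RC (-1)) (Cmul m1 m2)) (Cmul w (Hs m1 m2 N)))) by (rewrite RCm1; ring).
      eapply Rle_trans; [apply Cmod_add|].
      rewrite !Cmod_mul, Cmod_RC, Rabs_left by lra.
      pose proof (Hs_bound m1 m2 (S N) H1 H2). pose proof (Hs_bound m1 m2 N H1 H2).
      rewrite S_INR in H0. pose proof (Cmod_ge0 m1). pose proof (Cmod_ge0 m2). pose proof (Cmod_ge0 (Hs m1 m2 N)).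
      assert (Cmod m1 * Cmod m2 <= 1) by (replace 1 with (1 * 1) by ring; apply Rmult_le_compat; auto).
      assert (Cmod m1 * Cmod m2 * (Cmod w * Cmod (Hs m1 m2 N)) <= 1 * (1 * (INR N + 1))).
      { apply Rmult_le_compat; try apply Rmult_le_pos; auto. apply Rmult_le_compat; auto; lra. }
      lra. }
    assert (Hwr : Cmod (Cmul (Cpow w (S N)) rho) <= eps).
    { rewrite Cmod_mul, Cmod_pow. unfold eps. apply Rmult_le_compat_l; auto. apply pow_le; auto. }
    split.
    + eapply Rle_trans; [|apply Rplus_le_compat_l, Hwr].
      replace (Csub Defs.C1 (Cmul (Cpow w (S N)) rho)) with (Cadd Defs.C1 (Cmul (RC (-1)) (Cmul (Cpow w (S N)) rho)))
        by (rewrite RCm1; ring).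
      eapply Rle_trans; [apply Cmod_add|]. rewrite Cmod_C1, Cmod_mul, Cmod_RC, Rabs_left by lra. lra.
    + pose proof (Cmod_sub Defs.C1 (Cmul (Cpow w (S N)) rho)). rewrite Cmod_C1 in H. lra.
Qed.

Lemma sep_case3 a s p w : Gam s p -> Cnorm2 w < 1 -> Cmod (qq w s p) < Cmod a * (1 - Cnorm2 w) ->
  exists f, (forall y, Pdom y -> Cmod (eval_poly3 f y) <= 1) /\ 1 < Cmod (eval_poly3 f (a, s, p)).
Proof.
  intros HG Hw Hbad.
  assert (Hw1 : Cmod w < 1) by (apply Cmod_Cnorm2_lt1; auto).
  pose proof (Cmod_ge0 w) as Hw0.
  set (W := 1 - Cnorm2 w) in *.
  assert (HW : 0 < W) by (unfold W; lra).
  destruct (roots_exist s p) as [l1 [l2 [Hs Hp]]].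
  destruct (Gam_roots s p l1 l2 HG Hs Hp) as [Hl1 Hl2].
  subst s p.
  set (q := qq w (Cadd l1 l2) (Cmul l1 l2)) in *.
  assert (Hq0 : 0 < Cmod q).
  { destruct (Tbound w 0 a l1 l2 Hl1 Hl2 Hw1) as [H _]. exact H. }
  set (kap := Cmod a * W / Cmod q).
  assert (Hk : 1 < kap).
  { unfold kap. apply Rmult_lt_reg_r with (Cmod q); auto. unfold Rdiv. rewrite Rmult_assoc, Rinv_l by lra. lra. }
  destruct (small_eps (Cmod w) ((kap - 1) / (kap + 1)) (conj Hw0 Hw1)) as [N HN].
  { apply Rdiv_lt_0_compat; lra. }
  set (eps := Cmod w ^ S N * (2 * INR N + 3)) in *.
  assert (He0 : 0 <= eps).
  { unfold eps. apply Rmult_le_pos. apply pow_le; auto. pose proof (pos_INR N); lra. }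
  exists (pscale (RC (W / (1 + eps))) (pmul pvA (Tp w N))).
  assert (Hev : forall a' s' p', Cmod (eval_poly3 (pscale (RC (W / (1 + eps))) (pmul pvA (Tp w N))) (a', s', p'))
      = W / (1 + eps) * (Cmod a' * Cmod (eval_poly3 (Tp w N) (a', s', p')))).
  { intros. rewrite eval_pscale, eval_pmul, eval_pvA, !Cmod_mul, Cmod_RC, Rabs_right; auto.
    apply Rle_ge. unfold Rdiv. apply Rmult_le_pos; [lra|]. apply Rlt_le, Rinv_0_lt_compat; lra. }
  split.
  - intros [[a' s'] p'] Hy. apply Pdom_G in Hy.
    pose proof Hy as Hy'. destruct Hy' as [_ Hpsi]. specialize (Hpsi w Hw).
    destruct (Gset_roots_bound _ _ _ Hy) as [m1 [m2 [-> [-> [H1 H2]]]]].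
    destruct (Tbound w N a' m1 m2 H1 H2 Hw1) as [Hq' [Hup _]]. fold eps in Hup.
    rewrite Hev.
    set (Tv := Cmod (eval_poly3 (Tp w N) (a', Cadd m1 m2, Cmul m1 m2))) in *.
    set (q' := Cmod (qq w (Cadd m1 m2) (Cmul m1 m2))) in *.
    pose proof (Cmod_ge0 a'). assert (0 <= Tv) by apply Cmod_ge0.
    assert (Cmod a' * W * Tv <= q' * Tv) by (apply Rmult_le_compat_r; auto).
    replace (W / (1 + eps) * (Cmod a' * Tv)) with ((Cmod a' * W * Tv) / (1 + eps)) by (field; lra).
    apply Rmult_le_reg_r with (1 + eps); [lra|]. unfold Rdiv. rewrite Rmult_assoc, Rinv_l by lra. lra.
  - rewrite Hev.
    destruct (Tbound w N a l1 l2 Hl1 Hl2 Hw1) as [_ [_ Hlow]]. fold eps q in Hlow.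
    set (Tv := Cmod (eval_poly3 (Tp w N) (a, Cadd l1 l2, Cmul l1 l2))) in *.
    assert (Hka : Cmod a * W = kap * Cmod q) by (unfold kap; field; lra).
    assert (Heps : eps * (kap + 1) < kap - 1).
    { apply Rmult_lt_compat_r with (r := kap + 1) in HN; [|lra].
      replace ((kap - 1) / (kap + 1) * (kap + 1)) with (kap - 1) in HN by (field; lra). lra. }
    replace (W / (1 + eps) * (Cmod a * Tv)) with (kap * (Cmod q * Tv) / (1 + eps)) by (unfold kap; field; lra).
    apply Rmult_lt_reg_r with (1 + eps); [lra|]. unfold Rdiv. rewrite Rmult_assoc, Rinv_l by lra.
    assert (kap * (1 - eps) <= kap * (Cmod q * Tv)) by (apply Rmult_le_compat_l; lra).
    lra.
Qed.

Lemma Sep x : ~ Gset x ->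
  exists f, (forall y, Pdom y -> Cmod (eval_poly3 f y) <= 1) /\ 1 < Cmod (eval_poly3 f x).
Proof.
  destruct x as [[a s] p]. intro HnG.
  destruct (Rlt_or_le 1 (Cmod p)) as [Hp|Hp].
  - exact (sep_case1 (a, s, p) Hp).
  - destruct (Rlt_or_le (EE s p) (2 * Cmod (Dd s p))) as [HD|HD].
    + apply sep_case2; auto.
    + assert (HG : Gam s p) by (split; auto).
      assert (Hex : exists w, Cnorm2 w < 1 /\ Cmod (qq w s p) < Cmod a * (1 - Cnorm2 w)).
      { apply NNPP. intro Hno. apply HnG. split; auto. intros w Hw.
        destruct (Rle_or_lt (Cmod a * (1 - Cnorm2 w)) (Cmod (qq w s p))); auto.
        exfalso; apply Hno; exists w; auto. }
      destruct Hex as [w [Hw Hb]]. apply (sep_case3 a s p w); auto.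
Qed.

Lemma Pbar_G x : Pbar x -> Gset x.
Proof.
  intro Hx. apply NNPP. intro HnG. destruct (Sep x HnG) as [f [Hf Hfx]].
  pose proof (closure_bound f 1 Pdom x Hf Hx). lra.
Qed.

Lemma part1 x : ~ Pbar x ->
  exists f, (forall y, Pbar y -> Cmod (eval_poly3 f y) <= 1) /\ 1 < Cmod (eval_poly3 f x).
Proof.
  intro Hx. assert (HnG : ~ Gset x) by (intro HG; apply Hx, G_Pbar, HG).
  destruct (Sep x HnG) as [f [Hf Hfx]]. exists f. split; auto.
  intros y Hy. apply (closure_bound f 1 Pdom y Hf Hy).
Qed.

Lemma abs_between x b : Rabs x <= b -> - b <= x <= b.
Proof. intro H. pose proof (Rle_abs x). pose proof (Rle_abs (- x)). rewrite Rabs_Ropp in H1. lra. Qed.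

Lemma Cmod_near z z' : Cmod z' <= Cmod z + Cmod (Csub z' z) /\ Cmod z - Cmod (Csub z' z) <= Cmod z'.
Proof.
  split.
  - replace z' with (Cadd z (Csub z' z)) at 1 by ring. apply Cmod_add.
  - pose proof (Cmod_add z' (Csub z z')).
    replace (Cadd z' (Csub z z')) with z in H by ring.
    assert (Cmod (Csub z z') = Cmod (Csub z' z)) by (unfold Cmod; rewrite Cnorm2_sub_sym; auto). lra.
Qed.

Lemma n2_near z z' : Rabs (Cnorm2 z' - Cnorm2 z) <= (Cmod z' + Cmod z) * Cmod (Csub z' z).
Proof.
  destruct (Cmod_near z z') as [H1 H2]. destruct (Cmod_near z' z) as [H3 H4].
  assert (Cmod (Csub z z') = Cmod (Csub z' z)) by (unfold Cmod; rewrite Cnorm2_sub_sym; auto).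
  rewrite <- (Cmod_sq z), <- (Cmod_sq z').
  pose proof (Cmod_ge0 z). pose proof (Cmod_ge0 z'). pose proof (Cmod_ge0 (Csub z' z)).
  replace (Cmod z' * Cmod z' - Cmod z * Cmod z) with ((Cmod z' + Cmod z) * (Cmod z' - Cmod z)) by ring.
  rewrite Rabs_mult, (Rabs_right (Cmod z' + Cmod z)) by lra.
  apply Rmult_le_compat_l; [lra|]. apply Rabs_le. lra.
Qed.

Lemma one_minus_pos' l w sg : Cmod l <= sg -> Cmod w < 1 -> 0 <= sg -> 1 - sg <= Cmod (Csub Defs.C1 (Cmul l w)).
Proof.
  intros Hl Hw Hs. pose proof (Cmod_sub Defs.C1 (Cmul l w)). rewrite Cmod_C1, Cmod_mul in H.
  pose proof (Cmod_ge0 w). pose proof (Cmod_ge0 l).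
  assert (Cmod l * Cmod w <= sg * 1) by (apply Rmult_le_compat; lra). lra.
Qed.

Lemma PL a s p sg : Gset (a, s, p) -> 0 <= sg < 1 ->
  forall a' s' p',
    Cmod (Csub a' (Cmul (RC sg) a)) < (1 - sg) ^ 3 / 10 ->
    Cmod (Csub s' (Cmul (RC sg) s)) < (1 - sg) ^ 3 / 10 ->
    Cmod (Csub p' (Cmul (RC (sg * sg)) p)) < (1 - sg) ^ 3 / 10 ->
    Gset (a', s', p').
Proof.
  intros HG Hsg a' s' p' Ha Hs Hp.
  set (eta := (1 - sg) ^ 3 / 10) in *.
  assert (He : 0 < eta) by (unfold eta; assert (0 < (1 - sg) ^ 3) by (apply pow_lt; lra); lra).
  assert (He1 : eta <= (1 - sg) * (1 - sg) * (1 - sg) / 10) by (unfold eta; simpl; lra).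
  assert (H1s : 0 < 1 - sg <= 1) by lra.
  assert (Hcube : (1 - sg) * (1 - sg) * (1 - sg) <= (1 - sg) * (1 - sg)).
  { assert (0 <= (1 - sg) * (1 - sg)) by nra. nra. }
  assert (Hsq : (1 - sg) * (1 - sg) <= 1 - sg) by nra.
  destruct HG as [[HpG HDG] Hpsi].
  set (s0 := Cmul (RC sg) s) in *. set (p0 := Cmul (RC (sg * sg)) p) in *. set (a0 := Cmul (RC sg) a) in *.
  assert (HP1 : Cnorm2 p <= 1) by (rewrite <- Cmod_sq; pose proof (Cmod_ge0 p); nra).
  assert (HP0 : 0 <= Cnorm2 p) by apply Cnorm2_ge0.
  assert (HS2 : Cnorm2 s <= 4).
  { unfold EE in HDG. pose proof (Cmod_ge0 (Dd s p)). lra. }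
  assert (HsM : Cmod s <= 2) by (pose proof (Cmod_sq s); pose proof (Cmod_ge0 s); nra).
  assert (Hs0 : Cmod s0 <= 2) by (unfold s0; rewrite Cmod_nonneg_mul by lra; nra).
  assert (Hp0 : Cmod p0 <= sg * sg) by (unfold p0; rewrite Cmod_nonneg_mul by nra; nra).
  destruct (Cmod_near p0 p') as [Hp'1 Hp'2].
  destruct (Cmod_near s0 s') as [Hs'1 Hs'2].
  destruct (Cmod_near a0 a') as [Ha'1 Ha'2].
  split; [split|].
  -
    assert (eta <= 1 - sg * sg) by nra. lra.
  -
    assert (ED0 : Dd s0 p0 = Cmul (RC (sg * sg)) (Dd s p)).
    { unfold s0, p0, Dd. rewrite RC_mul. ring. }
    assert (EE0 : EE s0 p0 = 1 + (sg * sg) * (sg * sg) * Cnorm2 p - (sg * sg) * (Cnorm2 s / 2)).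
    { unfold EE, s0, p0. rewrite !n2_RCmul. field. }
    assert (Hm0 : (1 - sg) * (1 - sg) <= EE s0 p0 - 2 * Cmod (Dd s0 p0)).
    { rewrite ED0, EE0, Cmod_nonneg_mul by nra. unfold EE in HDG.
      assert (0 <= sg * sg <= 1) by nra.
      assert ((1 - sg) * (1 - sg) <= (1 - sg * sg) * (1 - sg * sg * Cnorm2 p)).
      { assert ((1 - sg) <= (1 - sg * sg)) by nra. assert (1 - sg <= 1 - sg * sg * Cnorm2 p) by nra.
        apply Rmult_le_compat; lra. }
      nra. }
    assert (Hdp : Rabs (Cnorm2 p' - Cnorm2 p0) <= 3 * eta).
    { eapply Rle_trans; [apply n2_near|]. pose proof (Cmod_ge0 (Csub p' p0)).
      assert (Cmod p' + Cmod p0 <= 3) by nra.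
      apply Rle_trans with (3 * Cmod (Csub p' p0)); [apply Rmult_le_compat_r; lra|lra]. }
    assert (Hds : Rabs (Cnorm2 s' - Cnorm2 s0) <= 5 * eta).
    { eapply Rle_trans; [apply n2_near|]. pose proof (Cmod_ge0 (Csub s' s0)).
      assert (Cmod s' + Cmod s0 <= 5) by nra.
      apply Rle_trans with (5 * Cmod (Csub s' s0)); [apply Rmult_le_compat_r; lra|lra]. }
    assert (HdD : Cmod (Csub (Dd s' p') (Dd s0 p0)) <= 9 / 4 * eta).
    { replace (Csub (Dd s' p') (Dd s0 p0)) with
        (Cadd (Cmul (RC (1/4)) (Cmul (Csub s' s0) (Cadd s' s0))) (Cmul (RC (-1)) (Csub p' p0)))
        by (unfold Dd; destruct s', s0, p', p0; unfold RC; csimpl; f_equal; field).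
      eapply Rle_trans; [apply Cmod_add|]. rewrite !Cmod_mul, !Cmod_RC.
      rewrite Rabs_right by lra. rewrite Rabs_left by lra.
      pose proof (Cmod_add s' s0). pose proof (Cmod_ge0 (Csub s' s0)).
      assert (Cmod (Csub s' s0) * Cmod (Cadd s' s0) <= eta * 5) by (apply Rmult_le_compat; try apply Cmod_ge0; lra).
      lra. }
    destruct (Cmod_near (Dd s0 p0) (Dd s' p')) as [HD1 _].
    unfold EE in *. apply abs_between in Hdp. apply abs_between in Hds.
    lra.
  -
    intros w Hw.
    assert (Hw1 : Cmod w < 1) by (apply Cmod_Cnorm2_lt1; auto).
    pose proof (Cmod_ge0 w) as Hw0.
    assert (Hsw : Cnorm2 (Cmul (RC sg) w) < 1) by (rewrite n2_RCmul; pose proof (Cnorm2_ge0 w); nra).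
    specialize (Hpsi _ Hsw). rewrite n2_RCmul in Hpsi.
    assert (Eq0 : qq (Cmul (RC sg) w) s p = qq w s0 p0) by (unfold qq, s0, p0; rewrite RC_mul; ring).
    rewrite Eq0 in Hpsi.
    set (Q := Cmod (qq w s0 p0)) in *.
    assert (HQ : (1 - sg) * (1 - sg) <= Q).
    { destruct (roots_exist s p) as [m1 [m2 [Es Ep]]].
      destruct (Gam_roots s p m1 m2 (conj HpG HDG) Es Ep) as [Hm1 Hm2].
      unfold Q, s0, p0. rewrite Es, Ep.
      replace (qq w (Cmul (RC sg) (Cadd m1 m2)) (Cmul (RC (sg * sg)) (Cmul m1 m2)))
        with (Cmul (Csub Defs.C1 (Cmul (Cmul (RC sg) m1) w)) (Csub Defs.C1 (Cmul (Cmul (RC sg) m2) w)))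
        by (unfold qq; rewrite RC_mul; ring).
      rewrite Cmod_mul.
      assert (Cmod (Cmul (RC sg) m1) <= sg) by (rewrite Cmod_nonneg_mul by lra; nra).
      assert (Cmod (Cmul (RC sg) m2) <= sg) by (rewrite Cmod_nonneg_mul by lra; nra).
      pose proof (one_minus_pos' (Cmul (RC sg) m1) w sg H Hw1 (proj1 Hsg)).
      pose proof (one_minus_pos' (Cmul (RC sg) m2) w sg H0 Hw1 (proj1 Hsg)).
      apply Rmult_le_compat; lra. }
    assert (Hq' : Q - 2 * eta <= Cmod (qq w s' p')).
    { destruct (Cmod_near (qq w s0 p0) (qq w s' p')) as [_ Hn]. fold Q in Hn.
      assert (Cmod (Csub (qq w s' p') (qq w s0 p0)) <= 2 * eta).
      { replace (Csub (qq w s' p') (qq w s0 p0)) with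
           (Cadd (Cmul (RC (-1)) (Cmul (Csub s' s0) w)) (Cmul (Csub p' p0) (Cmul w w)))
           by (unfold qq; rewrite RCm1; ring).
        eapply Rle_trans; [apply Cmod_add|]. rewrite !Cmod_mul, Cmod_RC, Rabs_left by lra.
        pose proof (Cmod_ge0 (Csub s' s0)). pose proof (Cmod_ge0 (Csub p' p0)).
        assert (Cmod (Csub s' s0) * Cmod w <= eta * 1) by (apply Rmult_le_compat; lra).
        assert (Cmod w * Cmod w <= 1) by nra.
        assert (Cmod (Csub p' p0) * (Cmod w * Cmod w) <= eta * 1) by (apply Rmult_le_compat; try lra; nra).
        lra. }
      lra. }
    assert (Ha0 : Cmod a0 * (1 - Cnorm2 w) <= sg * Q).
    { unfold a0. rewrite Cmod_nonneg_mul by lra.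
      pose proof (Cmod_ge0 a). pose proof (Cnorm2_ge0 w).
      assert (1 - Cnorm2 w <= 1 - sg * sg * Cnorm2 w) by nra.
      assert (sg * Cmod a * (1 - Cnorm2 w) <= sg * (Cmod a * (1 - sg * sg * Cnorm2 w))).
      { rewrite Rmult_assoc. apply Rmult_le_compat_l; [lra|]. apply Rmult_le_compat_l; lra. }
      assert (sg * (Cmod a * (1 - sg * sg * Cnorm2 w)) <= sg * Q) by (apply Rmult_le_compat_l; lra).
      lra. }
    pose proof (Cnorm2_ge0 w). pose proof (Cmod_ge0 a').
    assert (Cmod a' * (1 - Cnorm2 w) <= (Cmod a0 + eta) * (1 - Cnorm2 w)) by (apply Rmult_le_compat_r; lra).
    assert (eta * (1 - Cnorm2 w) <= eta) by nra.
    assert (3 * eta <= (1 - sg) * Q).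
    { assert ((1 - sg) * ((1 - sg) * (1 - sg)) <= (1 - sg) * Q) by (apply Rmult_le_compat_l; lra). nra. }
    nra.
Qed.

Definition mscale (c : R) (A : mat2) : mat2 :=
  Mat2 (Cmul (RC c) (a11 A)) (Cmul (RC c) (a12 A)) (Cmul (RC c) (a21 A)) (Cmul (RC c) (a22 A)).

Lemma piA_mscale c A : piA (mscale c A) = Dsc c (piA A).
Proof. unfold piA, mscale, Dsc; simpl. rewrite RC_mul. f_equal; [f_equal|]; ring. Qed.

Lemma mscale_inv c A : c <> 0 -> mscale c (mscale (/ c) A) = A.
Proof.
  intro Hc. destruct A as [[x1 y1] [x2 y2] [x3 y3] [x4 y4]]. unfold mscale, RC; simpl; csimpl.
  f_equal; f_equal; field; auto.
Qed.

Lemma contr_mscale c A r : 0 <= c -> contr A r -> contr (mscale c A) (c * r).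
Proof.
  intros Hc HA v1 v2. specialize (HA v1 v2). unfold mscale; simpl.
  replace (Cadd (Cmul (Cmul (RC c) (a11 A)) v1) (Cmul (Cmul (RC c) (a12 A)) v2))
    with (Cmul (RC c) (Cadd (Cmul (a11 A) v1) (Cmul (a12 A) v2))) by ring.
  replace (Cadd (Cmul (Cmul (RC c) (a21 A)) v1) (Cmul (Cmul (RC c) (a22 A)) v2))
    with (Cmul (RC c) (Cadd (Cmul (a21 A) v1) (Cmul (a22 A) v2))) by ring.
  rewrite !n2_RCmul. assert (0 <= c * c) by nra. nra.
Qed.

Lemma NL y : Pdom y -> exists del, 0 < del /\ exists t, 0 < t < 1 /\
  forall y', dist3 y y' < del -> Gset (Dsc (/ t) y').
Proof.
  intros [A [[r [Hr0 [Hr1 HA]]] Hy]].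
  set (rho := (1 + r) / 2).
  assert (Hrho : 0 < rho < 1) by (unfold rho; lra).
  assert (Hrr : / rho * r < 1).
  { apply Rmult_lt_reg_l with rho; [lra|]. rewrite <- Rmult_assoc, Rinv_r by lra. unfold rho; lra. }
  assert (Hrr0 : 0 <= / rho * r) by (apply Rmult_le_pos; [apply Rlt_le, Rinv_0_lt_compat|]; lra).
  pose proof (contr_mscale (/ rho) A r (Rlt_le _ _ (Rinv_0_lt_compat _ (proj1 Hrho))) HA) as HA'.
  pose proof (contr_G _ _ (conj Hrr0 Hrr) HA') as HG.
  assert (Hyg : y = Dsc rho (piA (mscale (/ rho) A))).
  { rewrite <- piA_mscale, mscale_inv by lra. auto. }
  destruct (piA (mscale (/ rho) A)) as [[ag sg0] pg] eqn:Eg.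
  set (sg := sqrt rho).
  assert (Hsg2 : sg * sg = rho) by (apply sqrt_sqrt; lra).
  assert (Hsg : 0 < sg < 1).
  { split. apply sqrt_lt_R0; lra. assert (0 <= sg) by apply sqrt_pos. nra. }
  set (eta := (1 - sg) ^ 3 / 10).
  assert (Heta : 0 < eta) by (unfold eta; assert (0 < (1 - sg) ^ 3) by (apply pow_lt; lra); lra).
  exists (eta * (sg * sg)). split; [nra|].
  exists sg. split; auto.
  intros [[a' s'] p'] Hd.
  rewrite Hyg in Hd. unfold Dsc in Hd |- *.
  destruct (dist3_ge1 (Cmul (RC rho) ag) (Cmul (RC rho) sg0) (Cmul (RC (rho * rho)) pg) a' s' p') as [Da [Ds Dp]].
  apply (PL ag sg0 pg sg HG (conj (Rlt_le _ _ (proj1 Hsg)) (proj2 Hsg))).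
  - replace (Csub (Cmul (RC (/ sg)) a') (Cmul (RC sg) ag)) with (Cmul (RC (/ sg)) (Csub a' (Cmul (RC rho) ag)))
      by (rewrite <- Hsg2; destruct a', ag; unfold RC; csimpl; f_equal; field; lra).
    rewrite Cmod_nonneg_mul by (apply Rlt_le, Rinv_0_lt_compat; lra). fold eta.
    apply Rmult_lt_reg_l with sg; [lra|]. rewrite <- Rmult_assoc, Rinv_r by lra.
    assert (eta * (sg * sg) <= sg * eta) by (assert (sg * sg <= sg) by nra; nra). lra.
  - replace (Csub (Cmul (RC (/ sg)) s') (Cmul (RC sg) sg0)) with (Cmul (RC (/ sg)) (Csub s' (Cmul (RC rho) sg0)))
      by (rewrite <- Hsg2; destruct s', sg0; unfold RC; csimpl; f_equal; field; lra).
    rewrite Cmod_nonneg_mul by (apply Rlt_le, Rinv_0_lt_compat; lra). fold eta.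
    apply Rmult_lt_reg_l with sg; [lra|]. rewrite <- Rmult_assoc, Rinv_r by lra.
    assert (eta * (sg * sg) <= sg * eta) by (assert (sg * sg <= sg) by nra; nra). lra.
  - replace (Csub (Cmul (RC (/ sg * / sg)) p') (Cmul (RC (sg * sg)) pg))
      with (Cmul (RC (/ sg * / sg)) (Csub p' (Cmul (RC (rho * rho)) pg)))
      by (rewrite <- Hsg2; destruct p', pg; unfold RC; csimpl; f_equal; field; lra).
    rewrite Cmod_nonneg_mul by (apply Rmult_le_pos; apply Rlt_le, Rinv_0_lt_compat; lra). fold eta.
    apply Rmult_lt_reg_l with (sg * sg); [nra|]. rewrite <- Rmult_assoc.
    replace (sg * sg * (/ sg * / sg)) with 1 by (field; lra). lra.
Qed.

Definition crd (i : nat) (x : C3) : R :=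
  let '(a, s, p) := x in
  match i with
  | 0 => fst a | 1 => snd a | 2 => fst s | 3 => snd s | 4 => fst p | _ => snd p
  end.

Definition Box : Type := ((nat -> R) * (nat -> R))%type.
Definition inbox (b : Box) (y : C3) : Prop :=
  forall i, (i < 6)%nat -> fst b i <= crd i y <= snd b i.
Definition upd (f : nat -> R) (j : nat) (v : R) : nat -> R :=
  fun i => if Nat.eqb i j then v else f i.
Definition wfb (b : Box) : Prop := forall i, (i < 6)%nat -> fst b i <= snd b i.
Definition halved (b b' : Box) (i : nat) : Prop :=
  fst b i <= fst b' i /\ snd b' i <= snd b i /\ snd b' i - fst b' i = (snd b i - fst b i) / 2.
Definition same (b b' : Box) (i : nat) : Prop := fst b' i = fst b i /\ snd b' i = snd b i.

Lemma sq_le_of_abs x w : Rabs x <= w -> x * x <= w * w.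
Proof. intro H. apply abs_between in H. nra. Qed.

Lemma dist3_crd_bound y z w : 0 <= w ->
  (forall i, (i < 6)%nat -> Rabs (crd i y - crd i z) <= w) -> dist3 y z <= 3 * w.
Proof.
  intros Hw H.
  destruct y as [[[y0 y1] [y2 y3]] [y4 y5]], z as [[[z0 z1] [z2 z3]] [z4 z5]].
  pose proof (sq_le_of_abs _ _ (H 0%nat ltac:(lia))) as H0.
  pose proof (sq_le_of_abs _ _ (H 1%nat ltac:(lia))) as H1.
  pose proof (sq_le_of_abs _ _ (H 2%nat ltac:(lia))) as H2.
  pose proof (sq_le_of_abs _ _ (H 3%nat ltac:(lia))) as H3.
  pose proof (sq_le_of_abs _ _ (H 4%nat ltac:(lia))) as H4.
  pose proof (sq_le_of_abs _ _ (H 5%nat ltac:(lia))) as H5.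
  simpl in H0, H1, H2, H3, H4, H5.
  unfold dist3. csimpl.
  apply Rle_trans with (sqrt (Rsqr (3 * w))).
  - apply sqrt_le_1_alt. unfold Rsqr. clear H. assert (0 <= w * w) by nra. nra.
  - rewrite sqrt_Rsqr; lra.
Qed.

Lemma crd_le_dist y i : (i < 6)%nat -> Rabs (crd i y) <= dist3 y (Defs.C0, Defs.C0, Defs.C0).
Proof.
  intro Hi. destruct y as [[[y0 y1] [y2 y3]] [y4 y5]]. unfold dist3, Defs.C0. csimpl.
  rewrite <- sqrt_Rsqr_abs. apply sqrt_le_1_alt. unfold Rsqr.
  destruct i as [|[|[|[|[|[|i]]]]]]; simpl; try nra; lia.
Qed.

Lemma cv_le u l B : Un_cv u l -> (forall m, u m <= B) -> l <= B.
Proof.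
  intros Hc Hb. destruct (Rle_or_lt l B) as [|Hlt]; auto. exfalso.
  destruct (Hc (l - B)) as [N HN]; [lra|]. specialize (HN N (le_n N)). specialize (Hb N).
  unfold Rdist in HN. pose proof (Rle_abs (- (u N - l))) as Ha. rewrite Rabs_Ropp in Ha. lra.
Qed.

Section Compact.
Variable Kset : C3 -> Prop.
Variable P : R -> C3 -> Prop.
Hypothesis Hmono : forall t t' y, P t y -> t <= t' -> t' < 1 -> P t' y.

Definition Good (b : Box) : Prop :=
  exists t, 0 < t < 1 /\ forall y, Kset y -> inbox b y -> P t y.

Lemma upd_eq f j v : upd f j v j = v.
Proof. unfold upd. rewrite Nat.eqb_refl. auto. Qed.
Lemma upd_neq f j v i : i <> j -> upd f j v i = f i.
Proof. intro H. unfold upd. destruct (Nat.eqb_spec i j); [contradiction|auto]. Qed.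

Lemma good_split b j m : (j < 6)%nat ->
  Good (fst b, upd (snd b) j m) -> Good (upd (fst b) j m, snd b) -> Good b.
Proof.
  intros Hj [t1 [Ht1 H1]] [t2 [Ht2 H2]].
  exists (Rmax t1 t2). split; [split; [apply Rlt_le_trans with t1; [lra|apply Rmax_l]|apply Rmax_lub_lt; lra]|].
  intros y Ky Hb.
  destruct (Rle_or_lt (crd j y) m) as [Hm|Hm].
  - apply (Hmono t1); [|apply Rmax_l|apply Rmax_lub_lt; lra].
    apply H1; auto. intros i Hi. simpl. destruct (Nat.eq_dec i j) as [->|Hne].
    + rewrite upd_eq. specialize (Hb j Hi). lra.
    + rewrite upd_neq by auto. apply Hb; auto.
  - apply (Hmono t2); [|apply Rmax_r|apply Rmax_lub_lt; lra].
    apply H2; auto. intros i Hi. simpl. destruct (Nat.eq_dec i j) as [->|Hne].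
    + rewrite upd_eq. specialize (Hb j Hi). lra.
    + rewrite upd_neq by auto. apply Hb; auto.
Qed.

Lemma step_k b : ~ Good b -> wfb b -> forall k, (k <= 6)%nat ->
  exists b', ~ Good b' /\ forall i, (i < 6)%nat -> ((i < k)%nat -> halved b b' i) /\ ((k <= i)%nat -> same b b' i).
Proof.
  intros Hb Hwf k. induction k; intro Hk.
  - exists b. split; auto. intros i Hi. split; [lia|]. intros _. split; auto.
  - destruct IHk as [b'' [Hb'' Hp]]; [lia|].
    set (m := (fst b'' k + snd b'' k) / 2).
    assert (Hkk : (k < 6)%nat) by lia.
    destruct (Hp k Hkk) as [_ Hs]. destruct (Hs (le_n k)) as [Es1 Es2].
    pose proof (Hwf k Hkk) as Hwk.
    destruct (classic (Good (fst b'', upd (snd b'') k m))) as [GL|GL].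
    + destruct (classic (Good (upd (fst b'') k m, snd b''))) as [GR|GR].
      * exfalso. apply Hb''. apply (good_split b'' k m); auto.
      * exists (upd (fst b'') k m, snd b''). split; auto. intros i Hi. split.
        -- intro Hik. destruct (Nat.eq_dec i k) as [->|Hne].
           ++ unfold halved; simpl. rewrite upd_eq. unfold m. rewrite Es1, Es2. repeat split; lra.
           ++ assert (i < k)%nat by lia. destruct (Hp i Hi) as [Hh _]. specialize (Hh H).
              unfold halved in *; simpl. rewrite upd_neq by auto. auto.
        -- intro Hki. destruct (Hp i Hi) as [_ Hsm]. specialize (Hsm ltac:(lia)).
           unfold same in *; simpl. rewrite upd_neq by lia. auto.
    + exists (fst b'', upd (snd b'') k m). split; auto. intros i Hi. split.
      * intro Hik. destruct (Nat.eq_dec i k) as [->|Hne].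
        -- unfold halved; simpl. rewrite upd_eq. unfold m. rewrite Es1, Es2. repeat split; lra.
        -- assert (i < k)%nat by lia. destruct (Hp i Hi) as [Hh _]. specialize (Hh H).
           unfold halved in *; simpl. rewrite upd_neq by auto. auto.
      * intro Hki. destruct (Hp i Hi) as [_ Hsm]. specialize (Hsm ltac:(lia)).
        unfold same in *; simpl. rewrite upd_neq by lia. auto.
Qed.

Definition relb (b b' : Box) : Prop := forall i, (i < 6)%nat -> halved b b' i.

Lemma step b : ~ Good b -> wfb b -> exists b', ~ Good b' /\ wfb b' /\ relb b b'.
Proof.
  intros Hb Hwf. destruct (step_k b Hb Hwf 6 (le_n 6)) as [b' [Hb' Hp]].
  exists b'. split; auto.
  assert (Hr : relb b b') by (intros i Hi; apply (Hp i Hi); auto).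
  split; auto. intros i Hi. destruct (Hr i Hi) as [_ [_ E]]. pose proof (Hwf i Hi). lra.
Qed.

Definition stepQ (b b' : Box) : Prop := (~ Good b /\ wfb b) -> (~ Good b' /\ wfb b' /\ relb b b').

Lemma stepQ_ex b : exists b', stepQ b b'.
Proof.
  destruct (classic (~ Good b /\ wfb b)) as [[H1 H2]|H].
  - destruct (step b H1 H2) as [b' Hb']. exists b'. intros _; auto.
  - exists b. intro; contradiction.
Qed.

Definition stepf (b : Box) : Box := epsilon (inhabits b) (stepQ b).

Lemma stepf_spec b : stepQ b (stepf b).
Proof. unfold stepf. apply epsilon_spec, stepQ_ex. Qed.

Definition seqb (b0 : Box) (n : nat) : Box := Nat.iter n stepf b0.

Lemma seqb_good b0 : ~ Good b0 -> wfb b0 -> forall n, ~ Good (seqb b0 n) /\ wfb (seqb b0 n).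
Proof.
  intros H1 H2 n. induction n.
  - simpl. auto.
  - destruct IHn as [A1 A2].
    pose proof (stepf_spec (seqb b0 n) (conj A1 A2)) as [C1 [C2 _]]. split; auto.
Qed.

Lemma seqb_rel b0 : ~ Good b0 -> wfb b0 -> forall n, relb (seqb b0 n) (seqb b0 (S n)).
Proof.
  intros H1 H2 n. destruct (seqb_good b0 H1 H2 n) as [A1 A2].
  apply (stepf_spec (seqb b0 n) (conj A1 A2)).
Qed.

Lemma pow2_ge n : 1 + INR n <= 2 ^ n.
Proof.
  induction n. simpl; lra. rewrite S_INR. simpl. pose proof (pos_INR n). lra.
Qed.

Lemma CL : compact3 Kset ->
  (forall y, Kset y -> exists del, 0 < del /\ exists t, 0 < t < 1 /\ forall y', dist3 y y' < del -> P t y') ->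
  exists t, 0 < t < 1 /\ forall y, Kset y -> P t y.
Proof.
  intros [Hcl [M HM]] Hloc.
  set (M' := Rabs M). assert (HM' : 0 <= M') by apply Rabs_pos.
  set (b0 := ((fun _ : nat => - M'), (fun _ : nat => M')) : Box).
  apply NNPP; intro Hno.
  assert (Hb0 : ~ Good b0).
  { intros [t [Ht H]]. apply Hno. exists t. split; auto. intros y Ky. apply H; auto.
    intros i Hi. simpl. pose proof (crd_le_dist y i Hi). specialize (HM y Ky).
    pose proof (Rle_abs M). apply abs_between. unfold M'. lra. }
  assert (Hw0 : wfb b0) by (intros i Hi; simpl; lra).
  set (S := seqb b0).
  pose proof (seqb_good b0 Hb0 Hw0) as HG. pose proof (seqb_rel b0 Hb0 Hw0) as HR. fold S in HG, HR.
  assert (Hwid : forall n i, (i < 6)%nat -> snd (S n) i - fst (S n) i = 2 * M' / 2 ^ n).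
  { intros n i Hi. induction n.
    - simpl. field.
    - destruct (HR n i Hi) as [_ [_ E]]. rewrite E, IHn. simpl. field. apply pow_nonzero. lra. }
  assert (Hmon : forall i, (i < 6)%nat -> forall n k, fst (S n) i <= fst (S (n + k)%nat) i /\ snd (S (n + k)%nat) i <= snd (S n) i).
  { intros i Hi n k. induction k.
    - rewrite Nat.add_0_r. lra.
    - rewrite Nat.add_succ_r. destruct (HR (n + k)%nat i Hi) as [E1 [E2 _]]. lra. }
  assert (Hnest : forall i, (i < 6)%nat -> forall n m, fst (S n) i <= snd (S m) i).
  { intros i Hi n m. destruct (Compare_dec.le_lt_dec n m) as [Hnm|Hnm].
    - replace m with (n + (m - n))%nat by lia. destruct (Hmon i Hi n (m - n)%nat) as [A1 _].
      destruct (HG (n + (m - n))%nat) as [_ W]. specialize (W i Hi). lra.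
    - replace n with (m + (n - m))%nat by lia. destruct (Hmon i Hi m (n - m)%nat) as [_ A2].
      destruct (HG (m + (n - m))%nat) as [_ W]. specialize (W i Hi). lra. }
  set (l := fun i => epsilon (inhabits 0) (fun L => Un_cv (fun n => fst (S n) i) L)).
  assert (Hl : forall i, (i < 6)%nat -> forall n, fst (S n) i <= l i <= snd (S n) i).
  { intros i Hi.
    assert (Hgr : Un_growing (fun n => fst (S n) i)).
    { intro n. destruct (HR n i Hi) as [E1 _]. exact E1. }
    assert (Hub : has_ub (fun n => fst (S n) i)).
    { exists (snd (S 0%nat) i). intros x [n ->]. apply Hnest; auto. }
    assert (Hcv : Un_cv (fun n => fst (S n) i) (l i)).
    { unfold l. apply epsilon_spec. destruct (growing_cv _ Hgr Hub) as [L HL]. exists L; auto. }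
    intro n. split.
    - apply (growing_ineq _ _ Hgr Hcv).
    - apply (cv_le _ _ _ Hcv). intro m. apply Hnest; auto. }
  set (ystar := ((l 0%nat, l 1%nat), (l 2%nat, l 3%nat), (l 4%nat, l 5%nat)) : C3).
  assert (Hcs : forall i, (i < 6)%nat -> crd i ystar = l i).
  { intros i Hi. destruct i as [|[|[|[|[|[|i]]]]]]; simpl; auto; lia. }
  assert (Hdist : forall n y, inbox (S n) y -> dist3 ystar y <= 3 * (2 * M' / 2 ^ n)).
  { intros n y Hy. apply dist3_crd_bound.
    - apply Rmult_le_pos; [lra|]. apply Rlt_le, Rinv_0_lt_compat, pow_lt; lra.
    - intros i Hi. rewrite Hcs by auto. specialize (Hy i Hi). specialize (Hl i Hi n).
      rewrite <- (Hwid n i Hi). apply Rabs_le. lra. }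
  assert (Hsmall : forall e, 0 < e -> exists n, 3 * (2 * M' / 2 ^ n) < e).
  { intros e He. destruct (INR_archimed e (6 * M')) as [n Hn]; auto. exists n.
    pose proof (pow2_ge n). pose proof (pos_INR n).
    assert (H2 : 0 < 2 ^ n) by (apply pow_lt; lra).
    replace (3 * (2 * M' / 2 ^ n)) with (6 * M' / 2 ^ n) by (field; lra).
    apply Rmult_lt_reg_r with (2 ^ n); auto. unfold Rdiv. rewrite Rmult_assoc, Rinv_l by lra.
    assert (e * (1 + INR n) <= e * 2 ^ n) by (apply Rmult_le_compat_l; lra). nra. }
  assert (Hne : forall n, exists y, Kset y /\ inbox (S n) y).
  { intro n. apply NNPP. intro Hn. destruct (HG n) as [Hb _]. apply Hb.
    exists (1/2). split; [lra|]. intros y Ky Hy. exfalso. apply Hn. exists y; auto. }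
  assert (Kstar : Kset ystar).
  { apply Hcl. intros e He. destruct (Hsmall e He) as [n Hn]. destruct (Hne n) as [y [Ky Hy]].
    exists y. split; auto. pose proof (Hdist n y Hy). lra. }
  destruct (Hloc ystar Kstar) as [del [Hdel [t [Ht Hty]]]].
  destruct (Hsmall del Hdel) as [n Hn].
  destruct (HG n) as [Hb _]. apply Hb. exists t. split; auto.
  intros y Ky Hy. apply Hty. pose proof (Hdist n y Hy). lra.
Qed.

End Compact.

Lemma part2 (Ks : C3 -> Prop) : compact3 Ks -> (forall y, Ks y -> Pdom y) ->
  forall x, poly_hull Ks x -> Pdom x.
Proof.
  intros Hc HKP x Hx.
  set (Pp := fun t y => 0 < t /\ Gset (Dsc (/ t) y)).
  assert (Hmono : forall t t' y, Pp t y -> t <= t' -> t' < 1 -> Pp t' y).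
  { intros t t' y [Ht HG] Htt Ht'. split; [lra|].
    replace (Dsc (/ t') y) with (Dsc (t * / t') (Dsc (/ t) y)).
    - apply G_scale; auto. split.
      + apply Rmult_le_pos; [lra|]. apply Rlt_le, Rinv_0_lt_compat; lra.
      + apply Rmult_le_reg_r with t'; [lra|]. rewrite Rmult_assoc, Rinv_l by lra. lra.
    - rewrite Dsc_comp. f_equal. field. lra. }
  destruct (CL Ks Pp Hmono Hc) as [t [Ht HKt]].
  { intros y Ky. destruct (NL y (HKP y Ky)) as [del [Hdel [t [Ht Hy]]]].
    exists del. split; auto. exists t. split; auto. intros y' Hy'. split; [lra|]. auto. }
  assert (HGx : Gset (Dsc (/ t) x)).
  { apply NNPP. intro HnG. destruct (Sep _ HnG) as [f [Hf Hfx]].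
    assert (Hb : Cmod (eval_poly3 (pdil (/ t) f) x) <= 1).
    { apply Hx. intros y Ky. rewrite eval_pdil.
      destruct (HKt y Ky) as [_ HGy].
      apply (closure_bound f 1 Pdom); auto. apply G_Pbar; auto. }
    rewrite eval_pdil in Hb. lra. }
  replace x with (Dsc t (Dsc (/ t) x)).
  - apply G_Pdom; auto. lra.
  - rewrite Dsc_comp. replace (t * / t) with 1 by (field; lra). apply Dsc_1.
Qed.

Theorem theorem6p3 :
  (forall x : C3, ~ Pbar x ->
     exists f : poly3,
       (forall y : C3, Pbar y -> Cmod (eval_poly3 f y) <= 1) /\
       1 < Cmod (eval_poly3 f x)) /\
  (forall K : C3 -> Prop,
     compact3 K -> (forall y, K y -> Pdom y) ->
     forall x : C3, poly_hull K x -> Pdom x).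
Proof.
  split.
  - apply part1.
  - apply part2.
Qed.
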